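(* For every second-order sentence $\psi$ there is a sentence $\phi$ of BID-logic such that for every suitable structure $M$, $M\models\psi$ if and only if $M\models_{\{\emptyset\}}\phi$.
   Context: Fix a first-order signature; structures have non-empty domains. An assignment on $M$ is a function from a finite set of variables into the domain of $M$; $s(a/x)$ agrees with $s$ except that it sends $x$ to $a$. A team $X$ of $M$ is a set of assignments all with the same domain $dom(X)$. For $F:X\to M$, $X(F/x)=\{s(F(s)/x):s\in X\}$; $X(M/x)=\{s(a/x):a\in M,s\in X\}$. Formulas of BID-logic: $\phi::=\alpha\mid=\!\!(t_1,\dots,t_n)\mid\neg=\!\!(t_1,\dots,t_n)\mid\bot\mid\phi\wedge\phi\mid\phi\otimes\phi\mid\phi\veebar\phi\mid\phi\to\phi\mid\phi\multimap\phi\mid\forall x\phi\mid\exists x\phi$, where $\alpha$ is a first-order literal (atomic or negated atomic formula) and $t_i$ are terms; $Fv(=\!\!(t_1,\dots,t_n))$ is the set of variables in $t_1,\dots,t_n$, otherwise free variables as usual; sentences have no free variables. Semantics for teams $X$ with $dom(X)\supseteq$ free variables: $M\models_X\alpha$ iff $M\models_s\alpha$ for all $s\in X$; $M\models_X=\!\!(t_1,\dots,t_n)$ iff for all $s,s'\in X$ with $s(t_i)=s'(t_i)$ for all $i<n$ we have $s(t_n)=s'(t_n)$; $M\models_X\neg=\!\!(t_1,\dots,t_n)$ iff $X=\emptyset$; $M\models_X\bot$ iff $X=\emptyset$; $\wedge$ as usual; $M\models_X\phi\otimes\psi$ iff $X=Y\cup Z$ for some $Y,Z\subseteq X$ with $M\models_Y\phi$,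 $M\models_Z\psi$; $M\models_X\phi\veebar\psi$ iff $M\models_X\phi$ or $M\models_X\psi$; $M\models_X\phi\to\psi$ iff for all $Y\subseteq X$, $M\models_Y\phi$ implies $M\models_Y\psi$; $M\models_X\phi\multimap\psi$ iff for every team $Y$ with $dom(Y)=dom(X)$, $M\models_Y\phi$ implies $M\models_{X\cup Y}\psi$; $M\models_X\exists x\phi$ iff $M\models_{X(F/x)}\phi$ for some $F:X\to M$; $M\models_X\forall x\phi$ iff $M\models_{X(M/x)}\phi$. $M\models_{\{\emptyset\}}\phi$ means the team consisting only of the empty assignment satisfies $\phi$. $M\models\psi$ is standard second-order semantics. *)

(* Defs.v *)
From mathcomp Require Import all_boot.
From Stdlib Require Import List.

Unset Printing Implicit Defensive.

Record signature := Signature {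
  fsym : Type;               (* function symbols (constants = arity 0) *)
  farity : fsym -> nat;
  rsym : Type;
  rarity : rsym -> nat }.
Arguments farity {s}.
Arguments rarity {s}.

(* A structure of the signature; the domain is non-empty (witness [pt]). *)
Record structure (S : signature) := Structure {
  carrier :> Type;
  pt : carrier;
  funI : forall f : fsym S, ('I_(farity f) -> carrier) -> carrier;
  relI : forall r : rsym S, ('I_(rarity r) -> carrier) -> Prop }.
Arguments carrier {S}.
Arguments pt {S}.
Arguments funI {S}.
Arguments relI {S}.

Inductive term (S : signature) : Type :=
  | Var : nat -> term S
  | Fn : forall f : fsym S, ('I_(farity f) -> term S) -> term S.
Arguments Var {S}.
Arguments Fn {S}.

Fixpoint occurs_t S (x : nat) (t : term S) : Prop :=
  match t with
  | Var y => x = y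
  | Fn _ args => exists i, @occurs_t S x (args i)
  end.

Arguments occurs_t {S}.

Fixpoint teval S (M : structure S) (rho : nat -> M) (t : term S) : M :=
  match t with
  | Var x => rho x
  | Fn f args => funI M f (fun i => @teval S M rho (args i))
  end.

Arguments teval {S}.

Inductive atom (S : signature) : Type :=
  | AEq : term S -> term S -> atom S
  | ARel : forall r : rsym S, ('I_(rarity r) -> term S) -> atom S.
Arguments AEq {S}.
Arguments ARel {S}.

Inductive literal (S : signature) : Type :=
  | LPos : atom S -> literal S
  | LNeg : atom S -> literal S.

Arguments LPos {S}.
Arguments LNeg {S}.

Definition atom_sat S (M : structure S) (rho : nat -> M) (a : atom S) : Prop :=
  match a with
  | AEq t u => teval M rho t = teval M rho u
  | ARel r args => relI M r (fun i => teval M rho (args i))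
  end.

Arguments atom_sat {S}.

Definition lit_sat S (M : structure S) (rho : nat -> M) (l : literal S) : Prop :=
  match l with
  | LPos a => atom_sat M rho a
  | LNeg a => ~ atom_sat M rho a
  end.

Arguments lit_sat {S}.

Definition occurs_a S (x : nat) (a : atom S) : Prop :=
  match a with
  | AEq t u => occurs_t x t \/ occurs_t x u
  | ARel _ args => exists i, occurs_t x (args i)
  end.

Arguments occurs_a {S}.

Definition occurs_l S (x : nat) (l : literal S) : Prop :=
  match l with LPos a => occurs_a x a | LNeg a => occurs_a x a end.

(* [BDep ts t] is the dependence atom =(t_1,...,t_{n-1}, t_n) with
   ts = [t_1;...;t_{n-1}] and t = t_n. *)
Arguments occurs_l {S}.

Inductive bid (S : signature) : Type :=
  | BLit : literal S -> bid S
  | BDep : list (term S) -> term S -> bid S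
  | BNDep : list (term S) -> term S -> bid S
  | BBot : bid S
  | BAnd : bid S -> bid S -> bid S
  | BTensor : bid S -> bid S -> bid S
  | BVee : bid S -> bid S -> bid S
  | BImp : bid S -> bid S -> bid S
  | BLolli : bid S -> bid S -> bid S
  | BAll : nat -> bid S -> bid S
  | BEx : nat -> bid S -> bid S.

Arguments BLit {S}.
Arguments BDep {S}.
Arguments BNDep {S}.
Arguments BBot {S}.
Arguments BAnd {S}.
Arguments BTensor {S}.
Arguments BVee {S}.
Arguments BImp {S}.
Arguments BLolli {S}.
Arguments BAll {S}.
Arguments BEx {S}.

Fixpoint bid_free S (x : nat) (phi : bid S) : Prop :=
  match phi with
  | BLit l => occurs_l x l
  | BDep ts t | BNDep ts t => (exists u, In u ts /\ occurs_t x u) \/ occurs_t x t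
  | BBot => False
  | BAnd p q | BTensor p q | BVee p q | BImp p q | BLolli p q =>
      @bid_free S x p \/ @bid_free S x q
  | BAll y p | BEx y p => x <> y /\ @bid_free S x p
  end.

Arguments bid_free {S}.

Definition bid_sentence S (phi : bid S) : Prop := forall x, ~ bid_free x phi.

(** Assignments: finite partial maps from variables into the domain,
    represented as [nat -> option M]; a team with domain [V] (a finite set
    of variables, given as a list) is a set of assignments each of which has
    domain exactly [V]. *)
Arguments bid_sentence {S}.

Definition asg (D : Type) := nat -> option D.

Definition has_dom D (V : list nat) (s : asg D) : Prop :=
  forall x, s x <> None <-> In x V.

Arguments has_dom {D}.

Definition team D := asg D -> Prop.

Definition team_on D (V : list nat) (X : team D) : Prop :=
  forall s, X s -> has_dom V s.

Arguments team_on {D}.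

Definition upd D (s : asg D) (x : nat) (a : D) : asg D :=
  fun y => if Nat.eqb y x then Some a else s y.

(* value of an assignment as a total valuation (default [pt] outside the
   domain; only used on variables of the domain). *)
Arguments upd {D}.

Definition val S (M : structure S) (s : asg M) : nat -> M :=
  fun x => match s x with Some a => a | None => pt M end.

Arguments val {S}.

Definition tv S (M : structure S) (s : asg M) (t : term S) : M :=
  teval M (val M s) t.

Arguments tv {S}.

Fixpoint bsat S (M : structure S) (V : list nat) (X : team M) (phi : bid S)
  {struct phi} : Prop :=
  match phi with
  | BLit l => forall s, X s -> lit_sat M (val M s) l
  | BDep ts t => forall s s', X s -> X s' ->
      (forall u, In u ts -> tv M s u = tv M s' u) -> tv M s t = tv M s' t
  | BNDep _ _ => forall s, ~ X s
  | BBot => forall s, ~ X s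
  | BAnd p q => @bsat S M V X p /\ @bsat S M V X q
  | BTensor p q => exists Y Z : team M,
      (forall s, X s <-> (Y s \/ Z s)) /\ @bsat S M V Y p /\ @bsat S M V Z q
  | BVee p q => @bsat S M V X p \/ @bsat S M V X q
  | BImp p q => forall Y : team M, (forall s, Y s -> X s) ->
      @bsat S M V Y p -> @bsat S M V Y q
  | BLolli p q => forall Y : team M, team_on V Y ->
      @bsat S M V Y p -> @bsat S M V (fun s => X s \/ Y s) q
  | BAll x p =>
      @bsat S M (x :: V) (fun s' => exists s a, X s /\ s' = upd s x a) p
  | BEx x p => exists F : asg M -> M,
      @bsat S M (x :: V) (fun s' => exists s, X s /\ s' = upd s x (F s)) p
  end.

Arguments bsat {S}.

Definition empty_team D : team D := fun s => s = (fun _ => None).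


Definition bid_models S (M : structure S) (phi : bid S) : Prop :=
  bsat M nil (empty_team M) phi.

Arguments bid_models {S}.

Inductive so (S : signature) : Type :=
  | SAtom : atom S -> so S
  | SRVar : nat -> forall n : nat, ('I_n -> term S) -> so S
  | SNot : so S -> so S
  | SAnd : so S -> so S -> so S
  | SOr : so S -> so S -> so S
  | SEx : nat -> so S -> so S
  | SAll : nat -> so S -> so S
  | SExR : nat -> nat -> so S -> so S
  | SAllR : nat -> nat -> so S -> so S.

Arguments SAtom {S}.
Arguments SRVar {S}.
Arguments SNot {S}.
Arguments SAnd {S}.
Arguments SOr {S}.
Arguments SEx {S}.
Arguments SAll {S}.
Arguments SExR {S}.
Arguments SAllR {S}.

Fixpoint so_free S (x : nat) (psi : so S) : Prop :=
  match psi with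
  | SAtom a => occurs_a x a
  | SRVar _ _ args => exists i, occurs_t x (args i)
  | SNot p => @so_free S x p
  | SAnd p q | SOr p q => @so_free S x p \/ @so_free S x q
  | SEx y p | SAll y p => x <> y /\ @so_free S x p
  | SExR _ _ p | SAllR _ _ p => @so_free S x p
  end.

Arguments so_free {S}.

Fixpoint so_rfree S (i n : nat) (psi : so S) : Prop :=
  match psi with
  | SAtom _ => False
  | SRVar j m _ => i = j /\ n = m
  | SNot p => @so_rfree S i n p
  | SAnd p q | SOr p q => @so_rfree S i n p \/ @so_rfree S i n q
  | SEx _ p | SAll _ p => @so_rfree S i n p
  | SExR j m p | SAllR j m p => ~ (i = j /\ n = m) /\ @so_rfree S i n p
  end.

Arguments so_rfree {S}.

Definition so_sentence S (psi : so S) : Prop :=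
  (forall x, ~ so_free x psi) /\ (forall i n, ~ so_rfree i n psi).

(* Relation environment: variable (i, n) denotes a set of n-tuples,
   represented as a predicate on sequences (only sequences of length n
   are ever tested). *)
Arguments so_sentence {S}.

Definition renv (D : Type) := nat -> nat -> (list D -> Prop).

Definition fupd D (rho : nat -> D) (x : nat) (a : D) : nat -> D :=
  fun y => if Nat.eqb y x then a else rho y.

Arguments fupd {D}.

Definition rupd D (G : renv D) (i n : nat) (P : list D -> Prop) : renv D :=
  fun j m => if Nat.eqb j i && Nat.eqb m n then P else G j m.

Arguments rupd {D}.

Fixpoint ssat S (M : structure S) (rho : nat -> M) (G : renv M) (psi : so S)
  {struct psi} : Prop :=
  match psi with
  | SAtom a => atom_sat M rho a
  | SRVar i n args => G i n [seq teval M rho (args k) | k <- enum 'I_n]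
  | SNot p => ~ @ssat S M rho G p
  | SAnd p q => @ssat S M rho G p /\ @ssat S M rho G q
  | SOr p q => @ssat S M rho G p \/ @ssat S M rho G q
  | SEx x p => exists a : M, @ssat S M (fupd rho x a) G p
  | SAll x p => forall a : M, @ssat S M (fupd rho x a) G p
  | SExR i n p => exists P : list M -> Prop, @ssat S M rho (rupd G i n P) p
  | SAllR i n p => forall P : list M -> Prop, @ssat S M rho (rupd G i n P) p
  end.

(* M |= psi for a sentence psi (the environments are irrelevant). *)
Arguments ssat {S}.

Definition so_models S (M : structure S) (psi : so S) : Prop :=
  ssat M (fun _ => pt M) (fun _ _ _ => False) psi.

Arguments so_models {S}.

(* Main.v *)
Require Import Defs.
From mathcomp Require Import all_boot zify.
From Stdlib Require Import List Arith Lia.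
From Stdlib Require Import Classical ClassicalEpsilon FunctionalExtensionality PropExtensionality.

Section Ext.
Variable S : signature.
Variable M : structure S.

Lemma teval_ext (t : term S) (rho rho' : nat -> M) :
  (forall x, occurs_t x t -> rho x = rho' x) -> teval M rho t = teval M rho' t.
Proof.
  induction t as [y|f args IH]; simpl; intros H.
  - apply H; reflexivity.
  - f_equal. apply functional_extensionality; intro i. apply IH.
    intros x Hx. apply H. exists i. exact Hx.
Qed.

Lemma ssat_ext (psi : so S) : forall rho rho' G G',
  (forall x, so_free x psi -> rho x = rho' x) ->
  (forall i n l, size l = n -> (G i n l <-> G' i n l)) ->
  (ssat M rho G psi <-> ssat M rho' G' psi).
Proof.
  induction psi as [a|i n args|p IH|p IHp q IHq|p IHp q IHq|x p IH|x p IH|i n p IH|i n p IH];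
    intros rho rho' G G' Hr HG; simpl in *.
  - destruct a as [t u|r args]; simpl in *.
    + rewrite (teval_ext t rho rho'); [|intros; apply Hr; tauto].
      rewrite (teval_ext u rho rho'); [|intros; apply Hr; tauto]. tauto.
    + assert (E : (fun i => teval M rho (args i)) = (fun i => teval M rho' (args i))).
      { apply functional_extensionality; intro i. apply teval_ext.
        intros; apply Hr; eauto. }
      rewrite E; tauto.
  - assert (E : [seq teval M rho (args k) | k <- enum 'I_n] =
                [seq teval M rho' (args k) | k <- enum 'I_n]).
    { apply eq_map; intro k. apply teval_ext; intros; apply Hr; eauto. }
    rewrite E. apply HG. by rewrite size_map size_enum_ord.
  - rewrite (IH rho rho' G G' Hr HG); tauto.
  - rewrite (IHp rho rho' G G') ?(IHq rho rho' G G'); auto; tauto.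
  - rewrite (IHp rho rho' G G') ?(IHq rho rho' G G'); auto; tauto.
  - assert (Hf : forall a y, so_free y p -> fupd rho x a y = fupd rho' x a y).
    { intros a y Hy; unfold fupd; destruct (Nat.eqb y x) eqn:E; auto;
      apply Hr; split; auto; intro; subst; rewrite Nat.eqb_refl in E; discriminate. }
    split; intros [a Ha]; exists a; revert Ha; apply (IH _ _ G G' (Hf a) HG).
  - assert (Hf : forall a y, so_free y p -> fupd rho x a y = fupd rho' x a y).
    { intros a y Hy; unfold fupd; destruct (Nat.eqb y x) eqn:E; auto;
      apply Hr; split; auto; intro; subst; rewrite Nat.eqb_refl in E; discriminate. }
    split; intros Ha a; generalize (Ha a); apply (IH _ _ G G' (Hf a) HG).
  - assert (Hg : forall P j m l, size l = m -> (rupd G i n P j m l <-> rupd G' i n P j m l)).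
    { intros P j m l Hl; unfold rupd; destruct (Nat.eqb j i && Nat.eqb m n); auto; tauto. }
    split; intros [P HP]; exists P; revert HP; apply (IH _ _ _ _ Hr (Hg P)).
  - assert (Hg : forall P j m l, size l = m -> (rupd G i n P j m l <-> rupd G' i n P j m l)).
    { intros P j m l Hl; unfold rupd; destruct (Nat.eqb j i && Nat.eqb m n); auto; tauto. }
    split; intros HP P; generalize (HP P); apply (IH _ _ _ _ Hr (Hg P)).
Qed.
End Ext.

Inductive rrep := RConst (b : bool) | RFun (ys : list nat) (b : nat).

Section Tr.
Context {S : signature}.

Fixpoint ren (sg : nat -> nat) (t : term S) : term S :=
  match t with
  | Var x => Var (sg x)
  | Fn f args => Fn f (fun i => ren sg (args i))
  end.

Definition rena sg (a : atom S) : atom S :=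
  match a with
  | AEq t u => AEq (ren sg t) (ren sg u)
  | ARel r args => ARel r (fun i => ren sg (args i))
  end.

Definition TOP : bid S := BImp BBot BBot.
Fixpoint allchain (ys : list nat) (p : bid S) : bid S :=
  match ys with nil => p | y :: ys => BAll y (allchain ys p) end.
Definition bconj (ls : list (literal S)) : bid S :=
  List.fold_right (fun l acc => BAnd (BLit l) acc) TOP ls.
Definition dep (xs : list nat) (y : nat) : bid S := BDep (List.map (@Var S) xs) (Var y).
Definition eqv (x y : nat) : atom S := AEq (Var x) (Var y).
Definition sgn (pol : bool) (a : atom S) : literal S := if pol then LPos a else LNeg a.
Definition supd (sg : nat -> nat) x v := fun y => if Nat.eqb y x then v else sg y.
Definition tupd (tau : nat -> nat -> rrep) i n r :=
  fun j m => if Nat.eqb j i && Nat.eqb m n then r else tau j m.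

Definition orc (big : bool) c real k (Ab Bb As Bs : bid S) : bid S :=
  if big then BEx k (BAnd (dep real k)
     (BTensor (BAnd (BLit (LPos (eqv k c))) Ab) (BAnd (BLit (LNeg (eqv k c))) Bb)))
  else BVee As Bs.
Definition exq real k (A : bid S) : bid S := BEx k (BAnd (dep real k) A).
Definition exr (big : bool) real k n (Fb Ft Ff : bid S) : bid S :=
  if big then allchain (iota k n) (BEx (k + n) (BAnd (dep (List.app real (iota k n)) (k + n)) Fb))
  else BVee Ft Ff.
Definition allr (big : bool) real k n (Fb Ft Ff : bid S) : bid S :=
  if big then allchain (iota k n) (BAll (k + n) (BImp (dep (List.app real (iota k n)) (k + n)) Fb))
  else BAnd Ft Ff.

Definition query (c : nat) (sg : nat -> nat) (ys : list nat) (b : nat) n (args : 'I_n -> term S) pol : bid S :=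
  BImp (bconj (seq.map (fun k0 : 'I_n => LPos (AEq (Var (seq.nth 0 ys k0)) (ren sg (args k0)))) (enum 'I_n)))
       (BLit (sgn pol (eqv b c))).

Fixpoint tr (big : bool) (c : nat) (real : list nat) (sg : nat -> nat)
  (tau : nat -> nat -> rrep) (k : nat) (pol : bool) (psi : so S) {struct psi} : bid S :=
  match psi with
  | SAtom a => BLit (sgn pol (rena sg a))
  | SRVar i n args =>
      match tau i n with
      | RConst b => if Bool.eqb b pol then TOP else BBot
      | RFun ys b => query c sg ys b n args pol
      end
  | SNot p => tr big c real sg tau k (negb pol) p
  | SAnd p q =>
      if pol then BAnd (tr big c real sg tau k pol p) (tr big c real sg tau k pol q)
      else orc big c real k (tr big c (k :: real) sg tau k.+1 pol p) (tr big c (k :: real) sg tau k.+1 pol q)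
             (tr big c real sg tau k pol p) (tr big c real sg tau k pol q)
  | SOr p q =>
      if pol then orc big c real k (tr big c (k :: real) sg tau k.+1 pol p) (tr big c (k :: real) sg tau k.+1 pol q)
             (tr big c real sg tau k pol p) (tr big c real sg tau k pol q)
      else BAnd (tr big c real sg tau k pol p) (tr big c real sg tau k pol q)
  | SEx x p =>
      if pol then exq real k (tr big c (k :: real) (supd sg x k) tau k.+1 pol p)
      else BAll k (tr big c (k :: real) (supd sg x k) tau k.+1 pol p)
  | SAll x p =>
      if pol then BAll k (tr big c (k :: real) (supd sg x k) tau k.+1 pol p)
      else exq real k (tr big c (k :: real) (supd sg x k) tau k.+1 pol p)
  | SExR i n p =>
      if pol then exr big real k n (tr big c real sg (tupd tau i n (RFun (iota k n) (k + n))) (k + n).+1 pol p)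
                     (tr big c real sg (tupd tau i n (RConst true)) k pol p)
                     (tr big c real sg (tupd tau i n (RConst false)) k pol p)
      else allr big real k n (tr big c real sg (tupd tau i n (RFun (iota k n) (k + n))) (k + n).+1 pol p)
                     (tr big c real sg (tupd tau i n (RConst true)) k pol p)
                     (tr big c real sg (tupd tau i n (RConst false)) k pol p)
  | SAllR i n p =>
      if pol then allr big real k n (tr big c real sg (tupd tau i n (RFun (iota k n) (k + n))) (k + n).+1 pol p)
                     (tr big c real sg (tupd tau i n (RConst true)) k pol p)
                     (tr big c real sg (tupd tau i n (RConst false)) k pol p)
      else exr big real k n (tr big c real sg (tupd tau i n (RFun (iota k n) (k + n))) (k + n).+1 pol p)
                     (tr big c real sg (tupd tau i n (RConst true)) k pol p)
                     (tr big c real sg (tupd tau i n (RConst false)) k pol p)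
  end.

Definition Small : bid S := BAll 3 (BAll 4 (BLit (LPos (eqv 3 4)))).
Definition Big : bid S := BImp Small BBot.
Definition top (psi : so S) : bid S :=
  BAll 2 (BVee (BAnd Small (tr false 2 [:: 2] (fun _ => 2) (fun _ _ => RConst false) 3 true psi))
               (BAnd Big (tr true 2 [:: 2] (fun _ => 2) (fun _ _ => RConst false) 3 true psi))).
End Tr.

Section Free.
Variable S : signature.

Lemma ren_free sg (t : term S) y : occurs_t y (ren sg t) -> exists x, sg x = y.
Proof.
  induction t as [x|f args IH]; simpl.
  - intros ->; eauto.
  - intros [i Hi]; eauto.
Qed.

Lemma allchain_free ys (p : bid S) y : bid_free y (allchain ys p) -> ~ In y ys /\ bid_free y p.
Proof.
  induction ys as [|z ys IH]; simpl; [tauto|].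
  intros [H1 H2]. destruct (IH H2). split; auto. intros [->|]; tauto.
Qed.

Lemma bconj_free (ls : list (literal S)) y : bid_free y (bconj ls) -> exists l, In l ls /\ occurs_l y l.
Proof.
  induction ls as [|l ls IH]; simpl; [tauto|].
  intros [H|H]; [eauto|]. destruct (IH H) as [l' [? ?]]; eauto.
Qed.

Lemma dep_free xs k y : bid_free y (@dep S xs k) -> In y xs \/ y = k.
Proof.
  simpl. intros [[u [Hu Ho]]|H].
  - apply in_map_iff in Hu. destruct Hu as [x [<- Hx]]. simpl in Ho. subst; auto.
  - simpl in H; auto.
Qed.

Lemma dep_free' (xs : list nat) y :
  (exists u : term S, In u (List.map Var xs) /\ occurs_t y u) -> In y xs.
Proof.
  intros [u [Hu Ho]]. apply in_map_iff in Hu. destruct Hu as [x [<- Hx]]. simpl in Ho. subst; auto.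
Qed.

Lemma in_iota_lt k n y : In y (iota k n) -> k <= y < k + n.
Proof.
  revert k; induction n as [|n IH]; intros k; simpl; [tauto|].
  intros [->|H]; [lia|]. apply IH in H. lia.
Qed.

Definition WF (tau : nat -> nat -> rrep) :=
  forall i n ys b, tau i n = RFun ys b -> size ys = n.

Definition okfree (c : nat) (real : list nat) (sg : nat -> nat) (tau : nat -> nat -> rrep) (y : nat) :=
  y = c \/ In y real \/ (exists x, sg x = y) \/
  (exists i n ys b, tau i n = RFun ys b /\ (In y ys \/ y = b)).

Lemma nth_In_lt (ys : list nat) (k0 : nat) : k0 < size ys -> In (seq.nth 0 ys k0) ys.
Proof.
  revert k0; induction ys as [|z ys IH]; intros k0; simpl; [lia|].
  destruct k0; simpl; [auto|]. intros H; right; apply IH; lia.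
Qed.

Lemma okfree_cons c real sg tau k y : okfree c (k :: real) sg tau y -> y <> k -> okfree c real sg tau y.
Proof. unfold okfree; simpl; intuition congruence. Qed.

Lemma okfree_supd c real sg tau k x y : okfree c (k :: real) (supd sg x k) tau y -> y <> k -> okfree c real sg tau y.
Proof.
  unfold okfree, supd; simpl. intros H Hy.
  destruct H as [H|[[H|H]|[[x' Hx]|H]]]; auto; try congruence.
  destruct (Nat.eqb x' x); [congruence|eauto].
Qed.

Lemma okfree_tupdF c real sg tau i n k y :
  okfree c real sg (tupd tau i n (RFun (iota k n) (k + n))) y -> ~ In y (iota k n) -> y <> k + n ->
  okfree c real sg tau y.
Proof.
  unfold okfree, tupd; intros H H1 H2.
  destruct H as [H|[H|[H|[j [m [ys [b [E Hy]]]]]]]]; auto.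
  destruct (Nat.eqb j i && Nat.eqb m n).
  - injection E; intros; subst; tauto.
  - right; right; right; eauto 10.
Qed.

Lemma okfree_tupdC c real sg tau i n b0 y :
  okfree c real sg (tupd tau i n (RConst b0)) y -> okfree c real sg tau y.
Proof.
  unfold okfree, tupd; intros H.
  destruct H as [H|[H|[H|[j [m [ys [b [E Hy]]]]]]]]; auto.
  destruct (Nat.eqb j i && Nat.eqb m n); [discriminate|].
  right; right; right; eauto 10.
Qed.

Lemma WF_tupdF tau i n k : WF tau -> WF (tupd tau i n (RFun (iota k n) (k + n))).
Proof.
  unfold WF, tupd; intros H j m ys b. destruct (Nat.eqb j i) eqn:E1; destruct (Nat.eqb m n) eqn:E2; simpl; eauto.
  intros E; injection E; intros; subst. apply Nat.eqb_eq in E2; subst. apply size_iota.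
Qed.

Lemma WF_tupdC tau i n b0 : WF tau -> WF (tupd tau i n (RConst b0)).
Proof.
  unfold WF, tupd; intros H j m ys b. destruct (Nat.eqb j i && Nat.eqb m n); [discriminate|eauto].
Qed.

Lemma tr_free (psi : so S) : forall big c real sg tau k pol y,
  WF tau -> bid_free y (tr big c real sg tau k pol psi) -> okfree c real sg tau y.
Proof.
  induction psi as [a|i n args|p IH|p IHp q IHq|p IHp q IHq|x p IH|x p IH|i n p IH|i n p IH];
    intros big c real sg tau k pol y WFt; simpl.
  - intros H. unfold okfree. right; right; left.
    destruct pol, a as [t u|r args]; simpl in H;
      try (destruct H as [H|H]; apply ren_free in H; auto);
      destruct H as [i H]; apply ren_free in H; auto.
  - destruct (tau i n) as [b|ys b] eqn:E.
    + destruct (Bool.eqb b pol); simpl; tauto.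
    + simpl. intros [H|H].
      * apply bconj_free in H. destruct H as [l [Hl Ho]].
        apply in_map_iff in Hl. destruct Hl as [k0 [<- _]].
        simpl in Ho. destruct Ho as [Ho|Ho].
        -- simpl in Ho; subst. unfold okfree; right; right; right. exists i, n, ys, b; split; auto.
           left. apply nth_In_lt. rewrite (WFt _ _ _ _ E). apply ltn_ord.
        -- apply ren_free in Ho. unfold okfree; auto.
      * unfold okfree.
        destruct pol; simpl in H; (destruct H as [H|H]; simpl in H; subst; [|auto]);
          right; right; right; exists i, n, ys, b; auto.
  - apply IH; auto.
  - destruct pol.
    + simpl; intros [H|H]; eauto.
    + unfold orc; destruct big; simpl.
      * intros [Hk [[H|H]|[[[H|H]|H]|[[H|H]|H]]]]; try contradiction.
        -- apply dep_free' in H. unfold okfree; auto.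
        -- subst; unfold okfree; auto.
        -- eapply okfree_cons; eauto.
        -- subst; unfold okfree; auto.
        -- eapply okfree_cons; eauto.
      * intros [H|H]; eauto.
  - destruct pol.
    + unfold orc; destruct big; simpl.
      * intros [Hk [[H|H]|[[[H|H]|H]|[[H|H]|H]]]]; try contradiction.
        -- apply dep_free' in H. unfold okfree; auto.
        -- subst; unfold okfree; auto.
        -- eapply okfree_cons; eauto.
        -- subst; unfold okfree; auto.
        -- eapply okfree_cons; eauto.
      * intros [H|H]; eauto.
    + simpl; intros [H|H]; eauto.
  - destruct pol; unfold exq; simpl.
    + intros [Hk [[H|H]|H]]; try contradiction.
      * apply dep_free' in H. unfold okfree; auto.
      * eapply okfree_supd; eauto.
    + intros [Hk H]. eapply okfree_supd; eauto.
  - destruct pol; unfold exq; simpl.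
    + intros [Hk H]. eapply okfree_supd; eauto.
    + intros [Hk [[H|H]|H]]; try contradiction.
      * apply dep_free' in H. unfold okfree; auto.
      * eapply okfree_supd; eauto.
  - destruct pol; [unfold exr|unfold allr]; destruct big; simpl;
      try (intros H; apply allchain_free in H; destruct H as [Hy H]; simpl in H;
           destruct H as [Hb [H|H]];
           [apply dep_free in H; destruct H as [H|H]; [apply in_app_or in H; destruct H; [unfold okfree; auto|contradiction]|contradiction]
           |eapply okfree_tupdF; [eapply IH; [apply WF_tupdF; auto|exact H]|auto|auto]]);
      intros [H|H]; eapply okfree_tupdC; eapply IH; eauto using WF_tupdC.
  - destruct pol; [unfold allr|unfold exr]; destruct big; simpl;
      try (intros H; apply allchain_free in H; destruct H as [Hy H]; simpl in H;
           destruct H as [Hb [H|H]];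
           [apply dep_free in H; destruct H as [H|H]; [apply in_app_or in H; destruct H; [unfold okfree; auto|contradiction]|contradiction]
           |eapply okfree_tupdF; [eapply IH; [apply WF_tupdF; auto|exact H]|auto|auto]]);
      intros [H|H]; eapply okfree_tupdC; eapply IH; eauto using WF_tupdC.
Qed.

Lemma top_sentence (psi : so S) : bid_sentence (top psi).
Proof.
  intros y. unfold top. simpl. intros [Hy [[H|H]|[[H|H]|H]]]; try tauto.
  - apply tr_free in H; [|intros ? ? ? ? E; discriminate].
    unfold okfree in H. simpl in H. destruct H as [H|[[H|H]|[[x H]|[i [n [ys [b [E _]]]]]]]]; try congruence.
  - apply tr_free in H; [|intros ? ? ? ? E; discriminate].
    unfold okfree in H. simpl in H. destruct H as [H|[[H|H]|[[x H]|[i [n [ys [b [E _]]]]]]]]; try congruence.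
Qed.

End Free.

Section Sem.
Context {S : signature} (M : structure S).

Definition agree (L : list nat) (r s : asg M) := forall v, In v L -> Defs.val M r v = Defs.val M s v.
Definition Gsem (X : team M) (real : list nat) (c : nat) (tau : nat -> nat -> rrep) (s : asg M) : renv M :=
  fun i n l =>
  match tau i n with
  | RConst b => b = true
  | RFun ys b => forall r, X r -> agree real r s -> seq.map (Defs.val M r) ys = l -> Defs.val M r b = Defs.val M r c
  end.
Definition rho (sg : nat -> nat) (s : asg M) : nat -> M := fun x => Defs.val M s (sg x).
Definition sem (pol : bool) (P : Prop) := if pol then P else ~ P.
Definition SEM pol sg tau X real c (p : so S) s := sem pol (ssat M (rho sg s) (Gsem X real c tau s) p).

Lemma sem_iff pol P Q : (P <-> Q) -> (sem pol P <-> sem pol Q).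
Proof. destruct pol; simpl; tauto. Qed.

Lemma val_upd s v a y : Defs.val M (upd s v a) y = if Nat.eqb y v then a else Defs.val M s y.
Proof. unfold Defs.val, upd. destruct (Nat.eqb y v); auto. Qed.

Lemma teval_ren sg s (t : term S) : teval M (Defs.val M s) (ren sg t) = teval M (rho sg s) t.
Proof.
  induction t as [x|f args IH]; simpl; auto.
  f_equal; apply functional_extensionality; auto.
Qed.

Lemma atom_ren sg s (a : atom S) : atom_sat M (Defs.val M s) (rena sg a) <-> atom_sat M (rho sg s) a.
Proof.
  destruct a as [t u|r args]; simpl.
  - rewrite !teval_ren; tauto.
  - assert (E : (fun i => teval M (Defs.val M s) (ren sg (args i))) = (fun i => teval M (rho sg s) (args i))).
    { apply functional_extensionality; intro; apply teval_ren. }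
    rewrite E; tauto.
Qed.

Lemma TOP_sat V X : bsat M V X (@TOP S).
Proof. simpl; auto. Qed.

Lemma bconj_sat V Y ls : bsat M V Y (bconj ls) <-> forall s, Y s -> forall l, In l ls -> lit_sat M (Defs.val M s) l.
Proof.
  induction ls as [|l ls IH]; simpl.
  - split; [intros _ s _ l []|intros _ Z _ H; exact H].
  - rewrite IH. split.
    + intros [H1 H2] s Hs l0 [<-|H]; eauto.
    + intros H; split; eauto.
Qed.

Lemma imp_flat V X ls l :
  bsat M V X (BImp (bconj ls) (BLit l)) <->
  forall s, X s -> (forall l0, In l0 ls -> lit_sat M (Defs.val M s) l0) -> lit_sat M (Defs.val M s) l.
Proof.
  simpl. split.
  - intros H s Hs Hl. apply (H (fun r => r = s)); [intros; subst; auto| |reflexivity].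
    apply bconj_sat. intros; subst; auto.
  - intros H Y HY Hc s Hs. apply H; auto. rewrite bconj_sat in Hc. eauto.
Qed.

Lemma dep_sat V Y xs y :
  bsat M V Y (dep xs y) <-> forall r r', Y r -> Y r' -> agree xs r r' -> Defs.val M r y = Defs.val M r' y.
Proof.
  simpl. unfold agree, tv. split.
  - intros H r r' Hr Hr' Ha. apply (H r r' Hr Hr').
    intros u Hu. apply in_map_iff in Hu. destruct Hu as [x [<- Hx]]. simpl. auto.
  - intros H r r' Hr Hr' Ha. simpl. apply H; auto.
    intros v Hv. apply (Ha (Var v)). apply in_map_iff; eauto.
Qed.

Fixpoint LF (phi : bid S) : Prop :=
  match phi with
  | BLolli _ _ => False
  | BAnd p q | BTensor p q | BVee p q => LF p /\ LF q
  | BImp p q => True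
  | BAll _ p | BEx _ p => LF p
  | _ => True
  end.

Lemma downward phi : LF phi -> forall V X Y, bsat M V X phi -> (forall s, Y s -> X s) -> bsat M V Y phi.
Proof.
  induction phi as [l|ts t|ts t| |p IHp q IHq|p IHp q IHq|p IHp q IHq|p IHp q IHq|p IHp q IHq|x p IH|x p IH];
    simpl; intros HL V X Y H HY; auto;
    try (intros s Hs; solve [apply (H s); auto | apply H; auto]).
  - destruct HL; split; [eapply IHp|eapply IHq]; try apply H; eauto.
  - destruct HL as [HL1 HL2]. destruct H as [Y1 [Z1 [HU [H1 H2]]]].
    exists (fun s => Y s /\ Y1 s), (fun s => Y s /\ Z1 s). split; [|split].
    + intros s; split; [intros Hs; generalize (proj1 (HU s) (HY s Hs)); tauto|tauto].
    + eapply IHp; eauto. simpl; tauto.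
    + eapply IHq; eauto. simpl; tauto.
  - destruct HL; destruct H; [left; eapply IHp|right; eapply IHq]; eauto.
  - contradiction.
  - eapply IH; eauto. simpl. intros s' [s [a [Hs ->]]]. exists s, a; auto.
  - destruct H as [F HF]. exists F. eapply IH; eauto. simpl. intros s' [s [Hs ->]]. exists s; auto.
Qed.

Lemma LF_tr (psi : so S) : forall big c real sg tau k pol, LF (tr big c real sg tau k pol psi).
Proof.
  assert (Hc : forall ys (p : bid S), LF p -> LF (allchain ys p)).
  { induction ys; simpl; auto. }
  induction psi; intros; simpl; auto;
    repeat match goal with
    | |- context [if ?b then _ else _] => destruct b
    | |- context [match ?t with RConst _ => _ | RFun _ _ => _ end] => destruct t
    end; unfold orc, exq, exr, allr; simpl; auto;
    try (destruct big; simpl; auto; apply Hc; simpl; auto).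
Qed.

Fixpoint updl (s : asg M) (ys : list nat) (l : list M) : asg M :=
  match ys, l with
  | y :: ys, a :: l => updl (upd s y a) ys l
  | _, _ => s
  end.

Definition chainT (X : team M) (ys : list nat) : team M :=
  fun r => exists s l, X s /\ size l = size ys /\ r = updl s ys l.

Lemma bsat_allchain ys : forall V X (phi : bid S),
  bsat M V X (allchain ys phi) <-> bsat M (rev_append ys V) (chainT X ys) phi.
Proof.
  induction ys as [|y ys IH]; intros V X phi; simpl.
  - assert (E : chainT X [::] = X).
    { apply functional_extensionality; intro r; apply propositional_extensionality; unfold chainT; split.
      - intros [s [l [Hs [Hl ->]]]]. destruct l; simpl; auto.
      - intros H; exists r, nil; simpl; auto. }
    rewrite E; tauto.
  - rewrite IH.
    assert (E : chainT (fun s' => exists s a, X s /\ s' = upd s y a) ys = chainT X (y :: ys)).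
    { apply functional_extensionality; intro r; apply propositional_extensionality; unfold chainT; split.
      - intros [s' [l [[s [a [Hs ->]]] [Hl ->]]]]. exists s, (a :: l); simpl; auto.
      - intros [s [l [Hs [Hl ->]]]]. destruct l as [|a l]; simpl in Hl; [discriminate|].
        exists (upd s y a), l; split; [eauto|split]; auto. }
    rewrite E; tauto.
Qed.

End Sem.

Section Inv.
Context {S : signature} (M : structure S).
Notation vl := (Defs.val M).

Definition FunOK (X : team M) (real : list nat) (tau : nat -> nat -> rrep) (k : nat) :=
  forall i n ys b, tau i n = RFun ys b ->
  [/\ size ys = n, (forall y, In y ys -> y < k), b < k,
      (forall s, X s -> forall l, size l = n -> exists r, X r /\ agree M real r s /\ seq.map (vl r) ys = l) &
      (forall r r', X r -> X r' -> agree M real r r' -> seq.map (vl r) ys = seq.map (vl r') ys -> vl r b = vl r' b)].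

Definition Inv (big : bool) (c : nat) (real : list nat) (sg : nat -> nat) (tau : nat -> nat -> rrep) (k : nat) (X : team M) :=
  [/\ In c real, (forall v, In v real -> v < k), (forall x, In (sg x) real), FunOK X real tau k &
      (big = false -> forall i n, exists b, tau i n = RConst b)].

Definition Mode (big : bool) := if big then forall a : M, exists b, b <> a else forall a b : M, a = b.

Lemma agree_sym L r s : agree M L r s -> agree M L s r.
Proof. unfold agree; intros H v Hv; symmetry; auto. Qed.
Lemma agree_trans L r s t : agree M L r s -> agree M L s t -> agree M L r t.
Proof. unfold agree; intros H1 H2 v Hv; rewrite H1; auto. Qed.
Lemma agree_refl L r : agree M L r r.
Proof. unfold agree; auto. Qed.
Lemma agree_incl L L' r s : agree M L' r s -> (forall v, In v L -> In v L') -> agree M L r s.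
Proof. unfold agree; auto. Qed.
Lemma agree_app L L' r s : agree M L r s -> agree M L' r s -> agree M (List.app L L') r s.
Proof. unfold agree; intros H1 H2 v Hv; apply in_app_or in Hv; destruct Hv; auto. Qed.

Lemma Gsem_agree X real c tau s s' i n l :
  agree M real s s' -> (Gsem M X real c tau s i n l <-> Gsem M X real c tau s' i n l).
Proof.
  intros Ha; unfold Gsem. destruct (tau i n) as [b|ys b]; [tauto|].
  split; intros H r Hr Hrs; apply H; auto; eapply agree_trans; eauto; auto using agree_sym.
Qed.

Lemma rho_agree sg real s s' : (forall x, In (sg x) real) -> agree M real s s' -> rho M sg s = rho M sg s'.
Proof. intros Hs Ha; apply functional_extensionality; intro x; unfold rho; apply Ha; auto. Qed.

Lemma SEM_agree pol sg tau X real c p s s' : (forall x, In (sg x) real) -> agree M real s s' ->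
  (SEM M pol sg tau X real c p s <-> SEM M pol sg tau X real c p s').
Proof.
  intros Hs Ha. unfold SEM. apply sem_iff. rewrite (rho_agree sg real s s' Hs Ha).
  apply ssat_ext; auto. intros; apply Gsem_agree; auto.
Qed.

Definition ExtT (k : nat) (X X' : team M) (real real' : list nat) :=
  (forall r', X' r' -> exists r, X r /\ forall v, v < k -> vl r' v = vl r v) /\
  (forall s' r, X' s' -> X r -> agree M real r s' ->
     exists r', X' r' /\ (forall v, v < k -> vl r' v = vl r v) /\ agree M real' r' s').

Lemma ExtT_weaken k X X' real real1 real2 : ExtT k X X' real real1 -> (forall v, In v real2 -> In v real1) ->
  ExtT k X X' real real2.
Proof.
  intros [H1 H2] Hi; split; auto. intros s' r Hs' Hr Ha. destruct (H2 s' r Hs' Hr Ha) as [r' [? [? ?]]].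
  exists r'; split; [|split]; auto. eapply agree_incl; eauto.
Qed.

Lemma map_val_eq (r r' : asg M) ys k : (forall y, In y ys -> y < k) -> (forall v, v < k -> vl r v = vl r' v) ->
  seq.map (vl r) ys = seq.map (vl r') ys.
Proof.
  intros Hy Hv. induction ys as [|y ys IH]; simpl; auto. f_equal.
  - apply Hv, Hy; simpl; auto.
  - apply IH; intros; apply Hy; simpl; auto.
Qed.

Lemma agree_ext_lt (r r' s : asg M) real k : (forall v, In v real -> v < k) ->
  (forall v, v < k -> vl r' v = vl r v) -> agree M real r s -> agree M real r' s.
Proof. intros Hk He Ha v Hv. rewrite He; auto. Qed.

Lemma Gsem_ext k X X' real real' c tau s' i n l :
  ExtT k X X' real real' -> (forall v, In v real -> In v real') -> (forall v, In v real -> v < k) -> c < k ->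
  FunOK X real tau k -> X' s' ->
  (Gsem M X' real' c tau s' i n l <-> Gsem M X real c tau s' i n l).
Proof.
  intros [Ha Hb] Hi Hk Hc HF Hs'. unfold Gsem. destruct (tau i n) as [b0|ys b] eqn:E; [tauto|].
  destruct (HF _ _ _ _ E) as [Hsz Hys Hb' _ _].
  split.
  - intros H r Hr Har Hm. destruct (Hb s' r) as [r' [Hr' [He Ha']]]; auto.
    rewrite <- (He b Hb'), <- (He c Hc). apply H; auto.
    rewrite <- Hm. apply (map_val_eq _ _ _ k); auto.
  - intros H r' Hr' Har' Hm. destruct (Ha r' Hr') as [r [Hr He]].
    rewrite (He b Hb') (He c Hc). apply H; [exact Hr| |].
    + intros v Hv. rewrite <- (He v (Hk v Hv)). apply Har'. auto.
    + rewrite <- Hm. symmetry. apply (map_val_eq _ _ _ k); auto.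
Qed.

Lemma FunOK_ext k X X' real real' tau :
  ExtT k X X' real real' -> (forall v, In v real -> In v real') -> (forall v, In v real -> v < k) ->
  FunOK X real tau k -> FunOK X' real' tau k.
Proof.
  intros [Ha Hb] Hi Hk HF i n ys b E. destruct (HF _ _ _ _ E) as [Hsz Hys Hb' Hex Hdep].
  split; auto.
  - intros s' Hs' l Hl. destruct (Ha s' Hs') as [s0 [Hs0 He0]].
    destruct (Hex s0 Hs0 l Hl) as [r [Hr [Har Hm]]].
    destruct (Hb s' r Hs' Hr) as [r' [Hr' [He Ha']]].
    + intros v Hv. rewrite Har; auto. symmetry; apply He0; auto.
    + exists r'; split; [|split]; auto. rewrite <- Hm. apply (map_val_eq _ _ _ k); auto.
  - intros r1' r2' H1 H2 Ha12 Hm. destruct (Ha r1' H1) as [r1 [Hr1 He1]]. destruct (Ha r2' H2) as [r2 [Hr2 He2]].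
    rewrite (He1 b Hb') (He2 b Hb'). apply Hdep; [exact Hr1|exact Hr2| |].
    + intros v Hv. rewrite <- He1, <- He2; auto.
    + rewrite <- (map_val_eq r1' r1 ys k), <- (map_val_eq r2' r2 ys k); auto.
Qed.

Lemma FunOK_mono X real tau k k' : k <= k' -> FunOK X real tau k -> FunOK X real tau k'.
Proof.
  intros Hk HF i n ys b E. destruct (HF _ _ _ _ E) as [Hsz Hys Hb' Hex Hdep].
  split; auto.
  - intros y Hy. specialize (Hys y Hy). lia.
  - lia.
Qed.

Definition Closed (X Y : team M) real := (forall s, Y s -> X s) /\ (forall r s, X r -> Y s -> agree M real r s -> Y r).

Lemma Gsem_sub X Y real c tau s i n l : Closed X Y real -> Y s ->
  (Gsem M Y real c tau s i n l <-> Gsem M X real c tau s i n l).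
Proof.
  intros [HYX HC] Hs. unfold Gsem. destruct (tau i n); [tauto|].
  split; intros H r Hr Har Hm; apply H; eauto.
Qed.

Lemma FunOK_sub X Y real tau k : Closed X Y real -> FunOK X real tau k -> FunOK Y real tau k.
Proof.
  intros [HYX HC] HF i n ys b E. destruct (HF _ _ _ _ E) as [Hsz Hys Hb' Hex Hdep].
  split; auto.
  intros s Hs l Hl. destruct (Hex s (HYX s Hs) l Hl) as [r [Hr [Har Hm]]]. exists r; split; eauto.
Qed.

Definition X1 (X : team M) (R : asg M -> M -> Prop) (v : nat) : team M :=
  fun s' => exists s a, X s /\ R s a /\ s' = upd s v a.

Lemma val_upd_lt (s : asg M) k a v : v < k -> vl (upd s k a) v = vl s v.
Proof. intros H. rewrite val_upd. destruct (Nat.eqb v k) eqn:E; auto. apply Nat.eqb_eq in E. lia. Qed.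

Lemma ExtT_X1 k X R real : (forall v, In v real -> v < k) ->
  (forall r s a, X r -> X s -> agree M real r s -> R s a -> R r a) ->
  ExtT k X (X1 X R k) real (k :: real).
Proof.
  intros Hk HR. split.
  - intros r' [s [a [Hs [Ha ->]]]]. exists s; split; auto. intros; apply val_upd_lt; auto.
  - intros s' r [s0 [a0 [Hs0 [Ha0 ->]]]] Hr Har.
    assert (Har0 : agree M real r s0).
    { intros v Hv. rewrite Har; auto. apply val_upd_lt; auto. }
    exists (upd r k a0). split; [exists r, a0; eauto|split].
    + intros; apply val_upd_lt; auto.
    + intros v [<-|Hv].
      * rewrite !val_upd Nat.eqb_refl; auto.
      * rewrite !val_upd_lt; auto.
Qed.

End Inv.

Section ZH.
Context {S : signature} (M : structure S).
Notation vl := (Defs.val M).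

Lemma updl_out ys : forall (s : asg M) l v, ~ In v ys -> vl (updl M s ys l) v = vl s v.
Proof.
  induction ys as [|y ys IH]; intros s l v Hv; simpl; auto.
  destruct l as [|a l]; auto. rewrite IH; [|simpl in Hv; tauto].
  rewrite val_upd. destruct (Nat.eqb v y) eqn:E; auto. apply Nat.eqb_eq in E. subst. simpl in Hv; tauto.
Qed.

Lemma updl_map ys : forall (s : asg M) l, NoDup ys -> size l = size ys -> seq.map (vl (updl M s ys l)) ys = l.
Proof.
  induction ys as [|y ys IH]; intros s l Hn Hl; simpl.
  - destruct l; simpl in *; congruence.
  - destruct l as [|a l]; simpl in Hl; [discriminate|]. inversion Hn; subst. simpl.
    f_equal.
    + rewrite updl_out; auto. rewrite val_upd Nat.eqb_refl; auto.
    + apply IH; auto.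
Qed.

Lemma NoDup_iota k n : NoDup (iota k n).
Proof.
  revert k; induction n as [|n IH]; intros k; simpl; constructor; auto.
  intros H. apply in_iota_lt in H. lia.
Qed.

Definition ZH (X : team M) (ys : list nat) (b : nat) (H : asg M -> list M -> M) : team M :=
  fun r => exists s l, X s /\ size l = size ys /\ r = upd (updl M s ys l) b (H s l).

Section WithK.
Variables (X : team M) (real : list nat) (k n : nat) (H : asg M -> list M -> M).
Hypothesis Hreal : forall v, In v real -> v < k.
Hypothesis HC : forall s s' l, X s -> X s' -> agree M real s s' -> H s l = H s' l.
Let ys := iota k n.
Let b := k + n.

Lemma ZH_lt s l v : v < k -> vl (upd (updl M s ys l) b (H s l)) v = vl s v.
Proof.
  intros Hv. rewrite val_upd. destruct (Nat.eqb v b) eqn:E.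
  - apply Nat.eqb_eq in E. unfold b in E. lia.
  - apply updl_out. intros Hi. apply in_iota_lt in Hi. lia.
Qed.

Lemma ZH_ys s l : size l = n -> seq.map (vl (upd (updl M s ys l) b (H s l))) ys = l.
Proof.
  intros Hl. transitivity (seq.map (vl (updl M s ys l)) ys);
    [|apply updl_map; [apply NoDup_iota|unfold ys; rewrite size_iota; auto]].
  apply/eq_in_map. intros y Hy. rewrite val_upd. destruct (Nat.eqb y b) eqn:E; auto.
  apply Nat.eqb_eq in E. unfold ys in Hy. rewrite mem_iota in Hy. unfold b in E. lia.
Qed.

Lemma ZH_b s l : vl (upd (updl M s ys l) b (H s l)) b = H s l.
Proof. rewrite val_upd Nat.eqb_refl; auto. Qed.

Lemma ZH_agree s l s' l' : agree M real s s' ->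
  agree M real (upd (updl M s ys l) b (H s l)) (upd (updl M s' ys l') b (H s' l')).
Proof. intros Ha v Hv. rewrite !ZH_lt; auto. Qed.

Lemma ZH_agree_inv s l s' l' : agree M real (upd (updl M s ys l) b (H s l)) (upd (updl M s' ys l') b (H s' l')) ->
  agree M real s s'.
Proof. intros Ha v Hv. rewrite <- (ZH_lt s l), <- (ZH_lt s' l'); auto. Qed.

Lemma ZH_ext : ExtT M k X (ZH X ys b H) real real.
Proof.
  split.
  - intros r' [s [l [Hs [Hl ->]]]]. exists s; split; auto. intros; apply ZH_lt; auto.
  - intros s' r [s0 [l0 [Hs0 [Hl0 ->]]]] Hr Har.
    exists (upd (updl M r ys l0) b (H r l0)). split; [exists r, l0; auto|split].
    + intros; apply ZH_lt; auto.
    + apply ZH_agree. eapply agree_trans; [exact Har|]. intros v Hv; apply ZH_lt; auto.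
Qed.

Lemma ZH_dep V : bsat M V (ZH X ys b H) (dep (List.app real ys) b).
Proof.
  apply dep_sat. intros r r' [s [l [Hs [Hl ->]]]] [s' [l' [Hs' [Hl' ->]]]] Ha.
  rewrite !ZH_b. unfold ys in Hl, Hl'; rewrite size_iota in Hl Hl'.
  assert (El : l = l').
  { rewrite <- (ZH_ys s l Hl), <- (ZH_ys s' l' Hl'). apply/eq_in_map. intros y Hy. apply Ha.
    apply in_or_app; right. unfold ys in *. rewrite mem_iota in Hy.
    clear -Hy.
    revert k Hy. induction n as [|m IH]; intros kk Hy; simpl; [lia|].
    destruct (Nat.eqb y kk) eqn:E; [apply Nat.eqb_eq in E; auto|right; apply IH; apply Nat.eqb_neq in E; lia]. }
  subst l'. apply HC; auto. eapply ZH_agree_inv. intros v Hv. apply Ha. apply in_or_app; auto.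
Qed.

Lemma ZH_funok tau i : FunOK M X real tau k -> FunOK M (ZH X ys b H) real (tupd tau i n (RFun ys b)) b.+1.
Proof.
  intros HF j m ys0 b0. unfold tupd. destruct (Nat.eqb j i && Nat.eqb m n) eqn:E.
  - intros Eq; injection Eq; intros; subst ys0 b0.
    apply andb_prop in E; destruct E as [_ E]; apply Nat.eqb_eq in E; subst m.
    split.
    + unfold ys; apply size_iota.
    + intros y Hy. apply in_iota_lt in Hy. unfold b; lia.
    + lia.
    + intros s' [s0 [l0 [Hs0 [Hl0 ->]]]] l Hl. exists (upd (updl M s0 ys l) b (H s0 l)).
      split; [exists s0, l; split; [auto|split; [unfold ys; rewrite size_iota; auto|auto]]|split].
      * apply ZH_agree, agree_refl.
      * apply ZH_ys; auto.
    + intros r r' [s1 [l1 [Hs1 [Hl1 ->]]]] [s2 [l2 [Hs2 [Hl2 ->]]]] Ha Hm.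
      unfold ys in Hl1, Hl2; rewrite size_iota in Hl1 Hl2.
      rewrite (ZH_ys s1 l1 Hl1) (ZH_ys s2 l2 Hl2) in Hm. subst l2.
      rewrite !ZH_b. apply HC; auto. eapply ZH_agree_inv; eauto.
  - intros Eq.
    assert (HF' : FunOK M (ZH X ys b H) real tau b.+1).
    { apply (FunOK_mono M (ZH X ys b H) real tau k); [unfold b; lia|].
      eapply FunOK_ext; [apply ZH_ext| |exact Hreal|exact HF]; auto. }
    exact (HF' j m ys0 b0 Eq).
Qed.

Lemma ZH_Gsem tau c i s0 l0 j m l : In c real -> X s0 -> size l0 = n -> size l = m -> FunOK M X real tau k ->
  (Gsem M (ZH X ys b H) real c (tupd tau i n (RFun ys b)) (upd (updl M s0 ys l0) b (H s0 l0)) j m l <->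
   rupd (Gsem M X real c tau s0) i n (fun l => H s0 l = vl s0 c) j m l).
Proof.
  intros Hc Hs0 Hl0 Hl HF. unfold rupd.
  assert (Hck : c < k) by auto.
  destruct (Nat.eqb j i && Nat.eqb m n) eqn:E.
  - unfold Gsem, tupd. rewrite E.
    apply andb_prop in E; destruct E as [_ E]; apply Nat.eqb_eq in E; subst m.
    split.
    + intros H0.
      assert (Hr := H0 (upd (updl M s0 ys l) b (H s0 l))).
      rewrite ZH_b (ZH_lt _ _ _ Hck) in Hr. apply Hr.
      * exists s0, l. split; [auto|split; [unfold ys; rewrite size_iota; auto|auto]].
      * apply ZH_agree, agree_refl.
      * apply ZH_ys; auto.
    + intros H0 r [s1 [l1 [Hs1 [Hl1 ->]]]] Ha Hm.
      unfold ys in Hl1; rewrite size_iota in Hl1. rewrite (ZH_ys s1 l1 Hl1) in Hm. subst l1.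
      apply ZH_agree_inv in Ha.
      rewrite ZH_b (ZH_lt _ _ _ Hck) (HC s1 s0 l Hs1 Hs0 Ha) H0. symmetry; apply Ha; auto.
  - assert (Eg : Gsem M (ZH X ys b H) real c (tupd tau i n (RFun ys b)) (upd (updl M s0 ys l0) b (H s0 l0)) j m l =
                 Gsem M (ZH X ys b H) real c tau (upd (updl M s0 ys l0) b (H s0 l0)) j m l).
    { unfold Gsem, tupd. rewrite E. reflexivity. }
    rewrite Eg. rewrite (Gsem_ext M k X); [|apply ZH_ext|auto|exact Hreal|exact Hck|exact HF|].
    + apply Gsem_agree. intros v Hv. apply ZH_lt; auto.
    + exists s0, l0. split; [auto|split; [unfold ys; rewrite size_iota; auto|auto]].
Qed.

End WithK.
End ZH.

Section FO.
Context {S : signature} (M : structure S).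
Notation vl := (Defs.val M).

Lemma teq (X Y : team M) : (forall s, X s <-> Y s) -> X = Y.
Proof. intros H; apply functional_extensionality; intro s; apply propositional_extensionality; auto. Qed.

Lemma agree_map real (r s : asg M) : agree M real r s <-> seq.map (vl r) real = seq.map (vl s) real.
Proof.
  induction real as [|v real IH]; simpl; split; auto.
  - intros _ v [].
  - intros H. f_equal; [apply H; simpl; auto|]. apply IH. intros u Hu; apply H; simpl; auto.
  - intros H. injection H; intros H1 H2. intros u [<-|Hu]; auto. apply IH in H1. auto.
Qed.

Definition keyc {A : Type} (i : inhabited A) (X : team M) (real : list nat) (P : asg M -> A -> Prop) (s : asg M) : A :=
  epsilon i (fun a => exists s1, X s1 /\ seq.map (vl s1) real = seq.map (vl s) real /\ P s1 a).

Lemma keyc_spec {A} (i : inhabited A) X real P s : X s -> (exists a, P s a) ->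
  (forall s1 a, X s1 -> agree M real s1 s -> P s1 a -> P s a) -> P s (keyc i X real P s).
Proof.
  intros Hs [a Ha] Hr. unfold keyc.
  destruct (epsilon_spec i (fun a => exists s1, X s1 /\ seq.map (vl s1) real = seq.map (vl s) real /\ P s1 a))
    as [s1 [Hs1 [Hm HP]]]; [exists a, s; auto|].
  eapply Hr; eauto. apply agree_map; auto.
Qed.

Lemma keyc_agree {A} (i : inhabited A) X real P r s : agree M real r s -> keyc i X real P r = keyc i X real P s.
Proof. intros H. apply agree_map in H. unfold keyc. rewrite H. reflexivity. Qed.

Lemma Inv_X1 big c real sg sg' tau k X R :
  Inv M big c real sg tau k X -> (forall x, In (sg' x) (k :: real)) ->
  (forall r s a, X r -> X s -> agree M real r s -> R s a -> R r a) ->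
  Inv M big c (k :: real) sg' tau k.+1 (X1 M X R k).
Proof.
  intros [Hc Hk Hs HF Hsm] Hs' HR. split; auto.
  - simpl; auto.
  - intros v [<-|Hv]; [lia|]. specialize (Hk v Hv); lia.
  - apply (FunOK_mono M _ _ _ k); [lia|]. eapply FunOK_ext; [apply ExtT_X1; eauto| |eauto|eauto].
    simpl; auto.
Qed.

Lemma SEM_X1 big c real sg tau k X R pol p s a :
  Inv M big c real sg tau k X ->
  (forall r s a, X r -> X s -> agree M real r s -> R s a -> R r a) ->
  X s -> R s a ->
  (SEM M pol sg tau (X1 M X R k) (k :: real) c p (upd s k a) <-> SEM M pol sg tau X real c p s).
Proof.
  intros [Hc Hk Hs HF Hsm] HR Hxs Hr. unfold SEM. apply sem_iff. apply ssat_ext.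
  - intros x _. unfold rho. apply val_upd_lt; auto.
  - intros i n l _. rewrite (Gsem_ext M k X); [|apply ExtT_X1; eauto|simpl; auto|eauto|eauto|eauto|exists s, a; auto].
    apply Gsem_agree. intros v Hv; apply val_upd_lt; auto.
Qed.

Lemma SEM_X1_supd big c real sg tau k X R pol p s a x :
  Inv M big c real sg tau k X ->
  (forall r s a, X r -> X s -> agree M real r s -> R s a -> R r a) ->
  X s -> R s a ->
  (SEM M pol (supd sg x k) tau (X1 M X R k) (k :: real) c p (upd s k a) <->
   sem pol (ssat M (fupd (rho M sg s) x a) (Gsem M X real c tau s) p)).
Proof.
  intros [Hc Hk Hs HF Hsm] HR Hxs Hr. unfold SEM. apply sem_iff. apply ssat_ext.
  - intros y _. unfold rho, supd, fupd. destruct (Nat.eqb y x).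
    + rewrite val_upd Nat.eqb_refl; auto.
    + apply val_upd_lt; auto.
  - intros i n l _. rewrite (Gsem_ext M k X); [|apply ExtT_X1; eauto|simpl; auto|eauto|eauto|eauto|exists s, a; auto].
    apply Gsem_agree. intros v Hv; apply val_upd_lt; auto.
Qed.

Lemma supd_real sg real x k : (forall y, In (sg y) real) -> forall y, In (supd sg x k y) (k :: real).
Proof. intros H y; unfold supd; destruct (Nat.eqb y x); simpl; auto. Qed.

Lemma Q_agree big c real sg tau k X pol p x (r s : asg M) a :
  Inv M big c real sg tau k X -> agree M real r s ->
  (sem pol (ssat M (fupd (rho M sg r) x a) (Gsem M X real c tau r) p) <->
   sem pol (ssat M (fupd (rho M sg s) x a) (Gsem M X real c tau s) p)).
Proof.
  intros [Hc Hk Hs HF Hsm] Ha. apply sem_iff.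
  rewrite (rho_agree M sg real r s Hs Ha). apply ssat_ext; auto. intros; apply Gsem_agree; auto.
Qed.

Lemma allq_correct big c real sg tau k x p pol V X (fp : bid S) :
  Inv M big c real sg tau k X ->
  (forall V' Y, Inv M big c (k :: real) (supd sg x k) tau k.+1 Y ->
     (bsat M V' Y fp <-> forall s, Y s -> SEM M pol (supd sg x k) tau Y (k :: real) c p s)) ->
  (bsat M V X (BAll k fp) <-> forall s, X s -> forall a, sem pol (ssat M (fupd (rho M sg s) x a) (Gsem M X real c tau s) p)).
Proof.
  intros HI IH. simpl.
  assert (E : (fun s' => exists s a, X s /\ s' = upd s k a) = X1 M X (fun _ _ => True) k).
  { apply teq; intros s'; unfold X1; split.
    - intros [s [a [? ?]]]; eauto.
    - intros [s [a [? [_ ?]]]]; eauto. }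
  rewrite E. assert (HR : forall r s (a : M), X r -> X s -> agree M real r s -> True -> True) by auto.
  rewrite IH; [|apply (Inv_X1 big c real sg); auto; apply supd_real; destruct HI; auto].
  split.
  - intros H s Hs a. rewrite <- (SEM_X1_supd big c real sg tau k X (fun _ _ => True)); auto.
    apply H. exists s, a; auto.
  - intros H s' [s [a [Hs [_ ->]]]]. rewrite (SEM_X1_supd big c real sg tau k X (fun _ _ => True)); auto.
Qed.

Lemma exq_correct big c real sg tau k x p pol V X (fp : bid S) :
  Inv M big c real sg tau k X ->
  (forall V' Y, Inv M big c (k :: real) (supd sg x k) tau k.+1 Y ->
     (bsat M V' Y fp <-> forall s, Y s -> SEM M pol (supd sg x k) tau Y (k :: real) c p s)) ->
  (bsat M V X (exq real k fp) <-> forall s, X s -> exists a, sem pol (ssat M (fupd (rho M sg s) x a) (Gsem M X real c tau s) p)).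
Proof.
  intros HI IH. unfold exq.
  change (bsat M V X (BEx k (BAnd (dep real k) fp))) with
    (exists F : asg M -> M, bsat M (k :: V) (fun s' => exists s, X s /\ s' = upd s k (F s)) (BAnd (dep real k) fp)).
  split.
  - intros [F [Hd Hf]].
    set (R := fun s a => a = F s).
    assert (E : (fun s' => exists s, X s /\ s' = upd s k (F s)) = X1 M X R k).
    { apply teq; intros s'; unfold X1, R; split.
      - intros [s [? ?]]; eauto.
      - intros [s [a [? [-> ?]]]]; eauto. }
    rewrite E in Hd Hf.
    assert (HR : forall r s a, X r -> X s -> agree M real r s -> R s a -> R r a).
    { intros r s a Hr Hs Ha Hra. unfold R in *; subst a.
      rewrite dep_sat in Hd.
      assert (H1 := Hd (upd r k (F r)) (upd s k (F s))).
      rewrite !val_upd Nat.eqb_refl in H1. symmetry; apply H1.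
      - exists r, (F r); unfold R; auto.
      - exists s, (F s); unfold R; auto.
      - destruct HI as [_ Hk _ _ _]. intros v Hv. rewrite !val_upd_lt; auto. }
    rewrite IH in Hf; [|apply (Inv_X1 big c real sg); auto; apply supd_real; destruct HI; auto].
    intros s Hs. exists (F s).
    rewrite <- (SEM_X1_supd big c real sg tau k X R); auto; [|unfold R; auto].
    apply Hf. exists s, (F s); unfold R; auto.
  - intros H.
    set (Q := fun s a => sem pol (ssat M (fupd (rho M sg s) x a) (Gsem M X real c tau s) p)).
    set (F := keyc (inhabits (pt M)) X real Q).
    exists F.
    set (R := fun s a => a = F s).
    change (bsat M (k :: V) (fun s' => exists s, X s /\ s' = upd s k (F s)) (dep real k) /\
            bsat M (k :: V) (fun s' => exists s, X s /\ s' = upd s k (F s)) fp).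
    assert (E : (fun s' => exists s, X s /\ s' = upd s k (F s)) = X1 M X R k).
    { apply teq; intros s'; unfold X1, R; split.
      - intros [s [? ?]]; eauto.
      - intros [s [a [? [-> ?]]]]; eauto. }
    rewrite E.
    assert (HR : forall r s a, X r -> X s -> agree M real r s -> R s a -> R r a).
    { intros r s a Hr Hs Ha Hra. unfold R in *; subst a. unfold F. apply keyc_agree; apply agree_sym; auto. }
    split.
    + apply dep_sat. intros r r' [s [a [Hs [Ha ->]]]] [s' [a' [Hs' [Ha' ->]]]] Hag.
      unfold R in Ha, Ha'; subst a a'. rewrite !val_upd Nat.eqb_refl.
      unfold F; apply keyc_agree. destruct HI as [_ Hk _ _ _].
      intros v Hv. assert (H1 := Hag v Hv).
      rewrite (val_upd_lt M s k (F s) v (Hk v Hv)) (val_upd_lt M s' k (F s') v (Hk v Hv)) in H1; auto.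
    + rewrite IH; [|apply (Inv_X1 big c real sg); auto; apply supd_real; destruct HI; auto].
      intros s' [s [a [Hs [Ha ->]]]].
      rewrite (SEM_X1_supd big c real sg tau k X R); auto.
      unfold R in Ha; subst a. unfold F. apply (keyc_spec _ X real Q s Hs (H s Hs)).
      intros s1 a Hs1 Ha1 HQ. unfold Q in *. rewrite <- (Q_agree big c real sg tau k X pol p x s1 s a); auto.
Qed.

End FO.

Section OR.
Context {S : signature} (M : structure S).
Notation vl := (Defs.val M).

Lemma Inv_sub big c real sg tau k X Y : Inv M big c real sg tau k X -> Closed M X Y real -> Inv M big c real sg tau k Y.
Proof. intros [Hc Hk Hs HF Hsm] HC; split; auto. eapply FunOK_sub; eauto. Qed.

Lemma SEM_sub pol sg tau X Y real c p s : Closed M X Y real -> Y s ->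
  (SEM M pol sg tau Y real c p s <-> SEM M pol sg tau X real c p s).
Proof.
  intros HC Hs. unfold SEM. apply sem_iff. apply ssat_ext; auto. intros; apply Gsem_sub; auto.
Qed.

Lemma SEM_small c real sg tau k X pol p s s' : Mode M false -> Inv M false c real sg tau k X ->
  (SEM M pol sg tau X real c p s <-> SEM M pol sg tau X real c p s').
Proof.
  intros Hm [Hc Hk Hs HF Hsm]. unfold SEM. apply sem_iff. apply ssat_ext.
  - intros; apply Hm.
  - intros i n l _. unfold Gsem. destruct (Hsm erefl i n) as [b E]. rewrite E. tauto.
Qed.

Definition other (a : M) : M := epsilon (inhabits (pt M)) (fun b => b <> a).
Lemma other_ne a : Mode M true -> other a <> a.
Proof. intros Hm. unfold other. apply (epsilon_spec (inhabits (pt M)) (fun b => b <> a)). apply Hm. Qed.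

Lemma dep_Rcons V X real k F : (forall v, In v real -> v < k) ->
  bsat M V (X1 M X (fun s a => a = F s) k) (dep real k) ->
  forall r s a, X r -> X s -> agree M real r s -> a = F s -> a = F r.
Proof.
  intros Hk Hd r s a Hr Hs Ha ->.
  rewrite dep_sat in Hd.
  assert (H1 := Hd (upd r k (F r)) (upd s k (F s))).
  rewrite !val_upd Nat.eqb_refl in H1. symmetry; apply H1.
  - exists r, (F r); auto.
  - exists s, (F s); auto.
  - intros v Hv. rewrite !val_upd_lt; auto.
Qed.

Lemma orc_correct big c real sg tau k pol p q V X (Ab Bb As Bs : bid S) :
  Mode M big -> Inv M big c real sg tau k X ->
  (forall V' Y, Inv M big c (k::real) sg tau k.+1 Y -> (bsat M V' Y Ab <-> forall s, Y s -> SEM M pol sg tau Y (k::real) c p s)) ->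
  (forall V' Y, Inv M big c (k::real) sg tau k.+1 Y -> (bsat M V' Y Bb <-> forall s, Y s -> SEM M pol sg tau Y (k::real) c q s)) ->
  (forall V' Y, Inv M big c real sg tau k Y -> (bsat M V' Y As <-> forall s, Y s -> SEM M pol sg tau Y real c p s)) ->
  (forall V' Y, Inv M big c real sg tau k Y -> (bsat M V' Y Bs <-> forall s, Y s -> SEM M pol sg tau Y real c q s)) ->
  (bsat M V X (orc big c real k Ab Bb As Bs) <->
   forall s, X s -> SEM M pol sg tau X real c p s \/ SEM M pol sg tau X real c q s).
Proof.
  intros Hm HI HAb HBb HAs HBs. unfold orc. destruct big.
  - change (bsat M V X (BEx k (BAnd (dep real k) (BTensor (BAnd (BLit (LPos (eqv k c))) Ab) (BAnd (BLit (LNeg (eqv k c))) Bb)))))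
      with (exists F : asg M -> M, bsat M (k :: V) (fun s' => exists s, X s /\ s' = upd s k (F s))
              (BAnd (dep real k) (BTensor (BAnd (BLit (LPos (eqv k c))) Ab) (BAnd (BLit (LNeg (eqv k c))) Bb)))).
    assert (HXF : forall F : asg M -> M, (fun s' => exists s, X s /\ s' = upd s k (F s)) = X1 M X (fun s a => a = F s) k).
    { intros F. apply teq; intros s'; unfold X1; split.
      - intros [s [? ?]]; eauto.
      - intros [s [a [? [-> ?]]]]; eauto. }
    destruct HI as [Hc Hk Hs HF Hsm] eqn:EHI.
    assert (Hsg : forall x, In (sg x) (k :: real)) by (simpl; auto).
    split.
    + intros [F HFb]. rewrite HXF in HFb. destruct HFb as [Hd [Y [Z [HU [[HYl HYA] [HZl HZB]]]]]].
      assert (HR := dep_Rcons _ X real k F Hk Hd).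
      assert (HI1 := Inv_X1 M true c real sg sg tau k X _ HI Hsg HR).
      assert (HCY : Closed M (X1 M X (fun s a => a = F s) k) Y (k :: real)).
      { split; [intros s Hy; apply HU; auto|].
        intros r s Hr Hy Ha. destruct (proj1 (HU r) Hr) as [H|H]; auto. exfalso.
        simpl in HYl, HZl. apply (HZl r H). rewrite (Ha k); [|simpl; auto]. rewrite (HYl s Hy).
        symmetry; apply Ha; simpl; auto. }
      assert (HCZ : Closed M (X1 M X (fun s a => a = F s) k) Z (k :: real)).
      { split; [intros s Hy; apply HU; auto|].
        intros r s Hr Hy Ha. destruct (proj1 (HU r) Hr) as [H|H]; auto. exfalso.
        simpl in HYl, HZl. apply (HZl s Hy). rewrite <- (Ha k); [|simpl; auto]. rewrite (HYl r H).
        apply Ha; simpl; auto. }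
      rewrite (HAb _ Y (Inv_sub _ _ _ _ _ _ _ _ HI1 HCY)) in HYA.
      rewrite (HBb _ Z (Inv_sub _ _ _ _ _ _ _ _ HI1 HCZ)) in HZB.
      intros s Hxs. assert (Hx1 : X1 M X (fun s a => a = F s) k (upd s k (F s))) by (exists s, (F s); auto).
      destruct (proj1 (HU _) Hx1) as [H|H].
      * left. rewrite <- (SEM_X1 M true c real sg tau k X (fun s a => a = F s) pol p s (F s)); auto.
        rewrite <- (SEM_sub pol sg tau _ Y); auto.
      * right. rewrite <- (SEM_X1 M true c real sg tau k X (fun s a => a = F s) pol q s (F s)); auto.
        rewrite <- (SEM_sub pol sg tau _ Z); auto.
    + intros H.
      set (F := fun s => if excluded_middle_informative
                  (exists s1, X s1 /\ agree M real s1 s /\ SEM M pol sg tau X real c p s1)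
                then vl s c else other (vl s c)).
      exists F. rewrite HXF.
      assert (HR : forall r s a, X r -> X s -> agree M real r s -> a = F s -> a = F r).
      { intros r s a Hr Hxs Ha ->. unfold F.
        assert (Ec : vl s c = vl r c) by (symmetry; apply Ha; auto). rewrite Ec.
        destruct (excluded_middle_informative _) as [[s1 [? [? ?]]]|N1];
        destruct (excluded_middle_informative _) as [[s2 [? [? ?]]]|N2]; auto; exfalso;
        first [apply N2; exists s1 | apply N1; exists s2]; (split; [|split]); auto;
        (eapply agree_trans; [eassumption|]); first [exact Ha | apply agree_sym; exact Ha]. }
      assert (HI1 := Inv_X1 M true c real sg sg tau k X _ HI Hsg HR).
      set (X1F := X1 M X (fun s a => a = F s) k).
      set (Y := fun r => X1F r /\ vl r k = vl r c).
      set (Z := fun r => X1F r /\ vl r k <> vl r c).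
      assert (HCY : Closed M X1F Y (k :: real)).
      { split; [intros s [? ?]; auto|]. intros r s Hr [Hy1 Hy2] Ha. split; auto.
        rewrite (Ha k); [|simpl; auto]. rewrite Hy2. symmetry; apply Ha; simpl; auto. }
      assert (HCZ : Closed M X1F Z (k :: real)).
      { split; [intros s [? ?]; auto|]. intros r s Hr [Hy1 Hy2] Ha. split; auto.
        rewrite (Ha k); [|simpl; auto]. rewrite (Ha c); [auto|simpl; auto]. }
      split; [|exists Y, Z; split; [|split; split]].
      * apply dep_sat. intros r r' [s [a [Hxs [Ha ->]]]] [s' [a' [Hxs' [Ha' ->]]]] Hag.
        subst a a'. rewrite !val_upd Nat.eqb_refl. apply (HR s' s (F s)); auto.
        intros v Hv. assert (H1 := Hag v Hv). rewrite !val_upd_lt in H1; auto.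
      * intros s; unfold Y, Z; split; [|tauto]. intros Hs1. destruct (classic (vl s k = vl s c)); auto.
      * intros s [_ Hs2]. simpl. exact Hs2.
      * rewrite (HAb _ Y (Inv_sub _ _ _ _ _ _ _ _ HI1 HCY)).
        intros s' Hy. destruct Hy as [[s [a [Hxs [Ha ->]]]] Hy2]. subst a.
        rewrite (SEM_sub pol sg tau X1F Y); [|auto|split; [exists s, (F s); auto|auto]].
        unfold X1F. rewrite (SEM_X1 M true c real sg tau k X (fun s a => a = F s) pol p s (F s)); auto.
        rewrite val_upd Nat.eqb_refl val_upd_lt in Hy2; auto.
        revert Hy2. unfold F at 1.
        destruct (excluded_middle_informative _) as [[s1 [? [? ?]]]|N1].
        -- intros _. rewrite <- (SEM_agree M pol sg tau X real c p s1 s); auto.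
        -- intros E. exfalso. apply (other_ne (vl s c) Hm); auto.
      * intros s [_ Hs2]. simpl. exact Hs2.
      * rewrite (HBb _ Z (Inv_sub _ _ _ _ _ _ _ _ HI1 HCZ)).
        intros s' Hz. destruct Hz as [[s [a [Hxs [Ha ->]]]] Hz2]. subst a.
        rewrite (SEM_sub pol sg tau X1F Z); [|auto|split; [exists s, (F s); auto|auto]].
        unfold X1F. rewrite (SEM_X1 M true c real sg tau k X (fun s a => a = F s) pol q s (F s)); auto.
        rewrite val_upd Nat.eqb_refl val_upd_lt in Hz2; auto.
        revert Hz2. unfold F at 1.
        destruct (excluded_middle_informative _) as [[s1 [? [? ?]]]|N1].
        -- intros E. exfalso. apply E. auto.
        -- intros _. destruct (H s Hxs) as [Hp|Hq]; auto. exfalso; apply N1. exists s; split; [|split]; auto.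
           apply agree_refl.
  - simpl. rewrite (HAs V X HI) (HBs V X HI). split.
    + intros [H|H] s Hs; auto.
    + intros H. destruct (classic (forall s, X s -> SEM M pol sg tau X real c p s)) as [H1|H1]; [left; auto|right].
      apply not_all_ex_not in H1. destruct H1 as [s0 H1].
      assert (H2 : X s0 /\ ~ SEM M pol sg tau X real c p s0) by tauto. destruct H2 as [Hs0 Hn].
      intros s Hs. rewrite (SEM_small c real sg tau k X pol q s s0); auto.
      destruct (H s0 Hs0); tauto.
Qed.

End OR.

Section REL.
Context {S : signature} (M : structure S).
Notation vl := (Defs.val M).

Definition QR pol sg X real c tau i n (p : so S) (s : asg M) (P : list M -> Prop) :=
  sem pol (ssat M (rho M sg s) (rupd (Gsem M X real c tau s) i n P) p).

Lemma Inv_tupdC big c real sg tau k X i n b :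
  Inv M big c real sg tau k X -> Inv M big c real sg (tupd tau i n (RConst b)) k X.
Proof.
  intros [Hc Hk Hs HF Hsm]; split; auto.
  - intros j m ys b0. unfold tupd. destruct (Nat.eqb j i && Nat.eqb m n); [discriminate|]. apply HF.
  - intros E j m. unfold tupd. destruct (Nat.eqb j i && Nat.eqb m n); eauto.
Qed.

Lemma SEM_tupdC pol sg tau X real c p s i n b :
  SEM M pol sg (tupd tau i n (RConst b)) X real c p s <-> QR pol sg X real c tau i n p s (fun _ => b = true).
Proof.
  unfold SEM, QR. apply sem_iff, ssat_ext; auto.
  intros j m l _. unfold Gsem, tupd, rupd. destruct (Nat.eqb j i && Nat.eqb m n); tauto.
Qed.

Lemma small_list l n : Mode M false -> size l = n -> l = nseq n (pt M).
Proof.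
  intros Hm. revert n; induction l as [|a l IH]; intros [|n] H; simpl in *; try discriminate; auto.
  f_equal; [apply Hm|]. apply IH. lia.
Qed.

Lemma QR_small pol sg X real c tau i n p s P : Mode M false ->
  (QR pol sg X real c tau i n p s P <-> QR pol sg X real c tau i n p s (fun _ => P (nseq n (pt M)))).
Proof.
  intros Hm. unfold QR. apply sem_iff, ssat_ext; auto.
  intros j m l Hl. unfold rupd. destruct (Nat.eqb j i && Nat.eqb m n) eqn:E; [|tauto].
  apply andb_prop in E; destruct E as [_ E]; apply Nat.eqb_eq in E; subst m.
  match goal with H : size l = n |- _ => rewrite (small_list l n Hm H) end; tauto.
Qed.

Lemma QR_small_s pol sg X real c tau k i n p s s' P : Mode M false -> Inv M false c real sg tau k X ->
  (QR pol sg X real c tau i n p s P <-> QR pol sg X real c tau i n p s' P).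
Proof.
  intros Hm [Hc Hk Hs HF Hsm]. unfold QR. apply sem_iff, ssat_ext.
  - intros; apply Hm.
  - intros j m l _. unfold rupd, Gsem. destruct (Nat.eqb j i && Nat.eqb m n); [tauto|].
    destruct (Hsm erefl j m) as [b E]. rewrite E. tauto.
Qed.

Lemma exr_small c real sg tau k i n pol p V X (Ft Ff : bid S) :
  Mode M false -> Inv M false c real sg tau k X ->
  (forall V' Y, Inv M false c real sg (tupd tau i n (RConst true)) k Y ->
     (bsat M V' Y Ft <-> forall s, Y s -> SEM M pol sg (tupd tau i n (RConst true)) Y real c p s)) ->
  (forall V' Y, Inv M false c real sg (tupd tau i n (RConst false)) k Y ->
     (bsat M V' Y Ff <-> forall s, Y s -> SEM M pol sg (tupd tau i n (RConst false)) Y real c p s)) ->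
  (bsat M V X (BVee Ft Ff) <-> forall s, X s -> exists P, QR pol sg X real c tau i n p s P).
Proof.
  intros Hm HI HT HF. simpl. rewrite (HT V X (Inv_tupdC _ _ _ _ _ _ _ _ _ _ HI)) (HF V X (Inv_tupdC _ _ _ _ _ _ _ _ _ _ HI)).
  split.
  - intros [H|H] s Hs; specialize (H s Hs); rewrite SEM_tupdC in H; eauto.
  - intros H. destruct (classic (forall s, X s -> SEM M pol sg (tupd tau i n (RConst true)) X real c p s)) as [H1|H1];
      [left; auto|right].
    apply not_all_ex_not in H1. destruct H1 as [s0 H1].
    assert (H2 : X s0 /\ ~ SEM M pol sg (tupd tau i n (RConst true)) X real c p s0) by tauto. destruct H2 as [Hs0 Hn].
    destruct (H s0 Hs0) as [P HP]. rewrite QR_small in HP; auto.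
    intros s Hs. rewrite SEM_tupdC. rewrite (QR_small_s pol sg X real c tau k i n p s s0); auto.
    destruct (classic (P (nseq n (pt M)))) as [HPn|HPn].
    + exfalso; apply Hn. rewrite SEM_tupdC. revert HP. unfold QR. apply sem_iff, ssat_ext; auto.
      intros j m l _. unfold rupd. destruct (Nat.eqb j i && Nat.eqb m n); tauto.
    + revert HP. unfold QR. apply sem_iff, ssat_ext; auto.
      intros j m l _. unfold rupd. destruct (Nat.eqb j i && Nat.eqb m n); [|tauto]. split; intros; first [discriminate | contradiction].
Qed.

Lemma allr_small c real sg tau k i n pol p V X (Ft Ff : bid S) :
  Mode M false -> Inv M false c real sg tau k X ->
  (forall V' Y, Inv M false c real sg (tupd tau i n (RConst true)) k Y ->
     (bsat M V' Y Ft <-> forall s, Y s -> SEM M pol sg (tupd tau i n (RConst true)) Y real c p s)) ->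
  (forall V' Y, Inv M false c real sg (tupd tau i n (RConst false)) k Y ->
     (bsat M V' Y Ff <-> forall s, Y s -> SEM M pol sg (tupd tau i n (RConst false)) Y real c p s)) ->
  (bsat M V X (BAnd Ft Ff) <-> forall s, X s -> forall P, QR pol sg X real c tau i n p s P).
Proof.
  intros Hm HI HT HF. simpl. rewrite (HT V X (Inv_tupdC _ _ _ _ _ _ _ _ _ _ HI)) (HF V X (Inv_tupdC _ _ _ _ _ _ _ _ _ _ HI)).
  split.
  - intros [H1 H2] s Hs P. rewrite QR_small; auto.
    destruct (classic (P (nseq n (pt M)))) as [HPn|HPn].
    + specialize (H1 s Hs). rewrite SEM_tupdC in H1. revert H1. unfold QR. apply sem_iff, ssat_ext; auto.
      intros j m l _. unfold rupd. destruct (Nat.eqb j i && Nat.eqb m n); tauto.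
    + specialize (H2 s Hs). rewrite SEM_tupdC in H2. revert H2. unfold QR. apply sem_iff, ssat_ext; auto.
      intros j m l _. unfold rupd. destruct (Nat.eqb j i && Nat.eqb m n); [|tauto]. split; intros; first [discriminate | contradiction].
  - intros H; split; intros s Hs; rewrite SEM_tupdC; apply H; auto.
Qed.

End REL.

Section RELB.
Context {S : signature} (M : structure S).
Notation vl := (Defs.val M).

Lemma QR_agree big c real sg tau k X pol i n p s s' P : Inv M big c real sg tau k X -> agree M real s s' ->
  (QR M pol sg X real c tau i n p s P <-> QR M pol sg X real c tau i n p s' P).
Proof.
  intros [Hc Hk Hs HF Hsm] Ha. unfold QR. apply sem_iff.
  rewrite (rho_agree M sg real s s' Hs Ha). apply ssat_ext; auto.
  intros j m l _. unfold rupd. destruct (Nat.eqb j i && Nat.eqb m n); [tauto|]. apply Gsem_agree; auto.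
Qed.

Lemma QR_ext pol sg X real c tau i n p s P1 P2 : (forall l, size l = n -> (P1 l <-> P2 l)) ->
  (QR M pol sg X real c tau i n p s P1 <-> QR M pol sg X real c tau i n p s P2).
Proof.
  intros HP. unfold QR. apply sem_iff, ssat_ext; auto.
  intros j m l Hl. unfold rupd. destruct (Nat.eqb j i && Nat.eqb m n) eqn:E; [|tauto].
  apply andb_prop in E; destruct E as [_ E]; apply Nat.eqb_eq in E; subst m. auto.
Qed.

Section Big.
Variables (c : nat) (real : list nat) (sg : nat -> nat) (tau : nat -> nat -> rrep) (k : nat) (i n : nat) (pol : bool) (p : so S).
Let ys := iota k n.
Let b := k + n.
Let tau' := tupd tau i n (RFun ys b).

Lemma Inv_ZH X H : Inv M true c real sg tau k X ->
  (forall s s' l, X s -> X s' -> agree M real s s' -> H s l = H s' l) ->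
  Inv M true c real sg tau' b.+1 (ZH M X ys b H).
Proof.
  intros [Hc Hk Hs HF Hsm] HC. split; auto.
  - intros v Hv. specialize (Hk v Hv). unfold b; lia.
  - apply ZH_funok; auto.
  - discriminate.
Qed.

Lemma SEM_ZH X H s0 l0 : Inv M true c real sg tau k X ->
  (forall s s' l, X s -> X s' -> agree M real s s' -> H s l = H s' l) ->
  X s0 -> size l0 = n ->
  (SEM M pol sg tau' (ZH M X ys b H) real c p (upd (updl M s0 ys l0) b (H s0 l0)) <->
   QR M pol sg X real c tau i n p s0 (fun l => H s0 l = vl s0 c)).
Proof.
  intros HI HC Hs0 Hl0. destruct HI as [Hc Hk Hs HF Hsm]. unfold SEM, QR. apply sem_iff, ssat_ext.
  - intros x _. unfold rho. apply ZH_lt; auto.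
  - intros j m l Hl. apply ZH_Gsem; auto.
Qed.

Lemma chain_ZH X F :
  (fun s' => exists s, chainT M X ys s /\ s' = upd s b (F s)) =
  ZH M X ys b (fun s l => if size l == n then F (updl M s ys l) else pt M).
Proof.
  apply teq; intros s'; unfold chainT, ZH; split.
  - intros [s [[s0 [l [Hs0 [Hl ->]]]] ->]]. exists s0, l. split; [auto|split; auto].
    unfold ys in Hl; rewrite size_iota in Hl. rewrite Hl eqxx. auto.
  - intros [s0 [l [Hs0 [Hl ->]]]]. exists (updl M s0 ys l). split; [exists s0, l; auto|].
    assert (Hl' := Hl). unfold ys in Hl'; rewrite size_iota in Hl'. rewrite Hl' eqxx. auto.
Qed.

Lemma map_eq_In (f g : nat -> M) (zs : list nat) : seq.map f zs = seq.map g zs -> forall y, In y zs -> f y = g y.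
Proof.
  induction zs as [|z zs IH]; simpl; [tauto|]. intros E y [<-|Hy]; injection E; auto.
Qed.

Lemma in_ys_ge y : In y ys -> k <= y < b.
Proof. intros H; apply in_iota_lt in H; unfold b; lia. Qed.

Lemma agree_ZH_row s l a (Hk : forall v, In v real -> v < k) :
  agree M (List.app real ys) (upd (updl M s ys l) b a) (updl M s ys l).
Proof.
  intros v Hv. rewrite val_upd. destruct (Nat.eqb v b) eqn:E; auto.
  apply Nat.eqb_eq in E. subst v. apply in_app_or in Hv. destruct Hv as [Hv|Hv].
  - specialize (Hk _ Hv). unfold b in Hk; lia.
  - apply in_ys_ge in Hv. lia.
Qed.

Lemma exr_big V X (Fb : bid S) :
  Mode M true -> Inv M true c real sg tau k X ->
  (forall V' Y, Inv M true c real sg tau' b.+1 Y ->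
     (bsat M V' Y Fb <-> forall s, Y s -> SEM M pol sg tau' Y real c p s)) ->
  (bsat M V X (allchain ys (BEx b (BAnd (dep (List.app real ys) b) Fb))) <->
   forall s, X s -> exists P, QR M pol sg X real c tau i n p s P).
Proof.
  intros Hm HI IH. rewrite bsat_allchain.
  change (bsat M (rev_append ys V) (chainT M X ys) (BEx b (BAnd (dep (List.app real ys) b) Fb))) with
    (exists F : asg M -> M, bsat M (b :: rev_append ys V) (fun s' => exists s, chainT M X ys s /\ s' = upd s b (F s))
        (BAnd (dep (List.app real ys) b) Fb)).
  assert (HI0 := HI); destruct HI0 as [Hc Hk Hs HF Hsm].
  split.
  - intros [F HFb]. rewrite chain_ZH in HFb. destruct HFb as [Hd HFb].
    set (H := fun s l => if size l == n then F (updl M s ys l) else pt M) in *.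
    assert (HC : forall s s' l, X s -> X s' -> agree M real s s' -> H s l = H s' l).
    { intros s s' l Hs1 Hs2 Ha. destruct (size l == n) eqn:El; [|unfold H; rewrite El; auto].
      move: El => /eqP El.
      rewrite dep_sat in Hd.
      assert (H1 := Hd (upd (updl M s ys l) b (H s l)) (upd (updl M s' ys l) b (H s' l))).
      rewrite !(ZH_b M k n H) in H1. apply H1.
      - exists s, l; split; [auto|split; [unfold ys; rewrite size_iota; auto|auto]].
      - exists s', l; split; [auto|split; [unfold ys; rewrite size_iota; auto|auto]].
      - intros v Hv. apply in_app_or in Hv. destruct Hv as [Hv|Hv].
        + rewrite !(ZH_lt M k n H); auto.
        + apply (map_eq_In _ _ ys); auto.
          rewrite (ZH_ys M k n H s l El) (ZH_ys M k n H s' l El). auto. }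
    rewrite IH in HFb; [|apply Inv_ZH; auto].
    intros s0 Hs0. exists (fun l => H s0 l = vl s0 c).
    rewrite <- (SEM_ZH X H s0 (nseq n (pt M))); auto; [|apply size_nseq].
    apply HFb. exists s0, (nseq n (pt M)). split; [auto|split; [unfold ys; rewrite size_iota size_nseq; auto|auto]].
  - intros Hall.
    set (Pk := keyc M (inhabits (fun _ : list M => True)) X real (QR M pol sg X real c tau i n p)).
    set (F := fun r => if excluded_middle_informative (Pk r (seq.map (vl r) ys)) then vl r c else other M (vl r c)).
    exists F. rewrite chain_ZH.
    set (H := fun s l => if size l == n then F (updl M s ys l) else pt M).
    assert (Hout : forall s l v, In v real -> vl (updl M s ys l) v = vl s v).
    { intros s l v Hv. apply updl_out. intros Hy. apply in_ys_ge in Hy. specialize (Hk v Hv). lia. }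
    assert (HF1 : forall s l, size l = n -> H s l = if excluded_middle_informative (Pk s l) then vl s c else other M (vl s c)).
    { intros s l Hl. unfold H. rewrite Hl eqxx. unfold F.
      rewrite (updl_map M ys s l (NoDup_iota k n)); [|unfold ys; rewrite size_iota; auto].
      rewrite (Hout s l c Hc).
      assert (EP : Pk (updl M s ys l) = Pk s).
      { unfold Pk. apply keyc_agree. intros v Hv. apply Hout; auto. }
      rewrite EP. reflexivity. }
    assert (HC : forall s s' l, X s -> X s' -> agree M real s s' -> H s l = H s' l).
    { intros s s' l Hs1 Hs2 Ha. destruct (size l == n) eqn:El; [|unfold H; rewrite El; auto].
      move: El => /eqP El. rewrite (HF1 s l El) (HF1 s' l El).
      assert (EP : Pk s = Pk s') by (unfold Pk; apply keyc_agree; auto).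
      rewrite EP (Ha c Hc). reflexivity. }
    split.
    + apply (ZH_dep M X real k n H Hk HC).
    + rewrite IH; [|apply Inv_ZH; auto].
      intros s' [s0 [l0 [Hs0 [Hl0 ->]]]].
      assert (Hl0' := Hl0). unfold ys in Hl0'; rewrite size_iota in Hl0'.
      rewrite SEM_ZH; auto.
      apply (QR_ext pol sg X real c tau i n p s0 (Pk s0)).
      * intros l Hl. rewrite (HF1 s0 l Hl).
        destruct (excluded_middle_informative (Pk s0 l)) as [Hp|Hp]; split; intros E; auto; try contradiction;
          exfalso; apply (other_ne M (vl s0 c) Hm); auto.
      * unfold Pk. apply keyc_spec; auto.
        intros s1 P Hs1 Ha. apply (QR_agree true c real sg tau k X pol i n p s1 s0 P); auto.
Qed.

Lemma allr_big V X (Fb : bid S) :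
  Mode M true -> Inv M true c real sg tau k X -> LF Fb ->
  (forall V' Y, Inv M true c real sg tau' b.+1 Y ->
     (bsat M V' Y Fb <-> forall s, Y s -> SEM M pol sg tau' Y real c p s)) ->
  (bsat M V X (allchain ys (BAll b (BImp (dep (List.app real ys) b) Fb))) <->
   forall s, X s -> forall P, QR M pol sg X real c tau i n p s P).
Proof.
  intros Hm HI HLF IH. rewrite bsat_allchain.
  set (X3 := fun s' => exists s a, chainT M X ys s /\ s' = upd s b a).
  change (bsat M (rev_append ys V) (chainT M X ys) (BAll b (BImp (dep (List.app real ys) b) Fb))) with
    (forall Y, (forall s, Y s -> X3 s) -> bsat M (b :: rev_append ys V) Y (dep (List.app real ys) b) ->
       bsat M (b :: rev_append ys V) Y Fb).
  assert (HI0 := HI); destruct HI0 as [Hc Hk Hs HF Hsm].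
  assert (Hout : forall s l v, In v real -> vl (updl M s ys l) v = vl s v).
  { intros s l v Hv. apply updl_out. intros Hy. apply in_ys_ge in Hy. specialize (Hk v Hv). lia. }
  split.
  - intros Hall s0 Hs0 P.
    set (H := fun (s : asg M) l => if excluded_middle_informative (P l) then vl s c else other M (vl s c)).
    assert (HC : forall s s' l, X s -> X s' -> agree M real s s' -> H s l = H s' l).
    { intros s s' l _ _ Ha. unfold H. rewrite (Ha c Hc). reflexivity. }
    assert (HZ := Hall (ZH M X ys b H)).
    rewrite IH in HZ; [|apply Inv_ZH; auto].
    assert (Hn : size (nseq n (pt M)) = n) by apply size_nseq.
    rewrite <- (QR_ext pol sg X real c tau i n p s0 (fun l => H s0 l = vl s0 c)).
    + rewrite <- (SEM_ZH X H s0 (nseq n (pt M))); auto.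
      apply HZ.
      * intros r [s1 [l1 [Hs1 [Hl1 ->]]]]. exists (updl M s1 ys l1), (H s1 l1). split; auto. exists s1, l1; auto.
      * apply (ZH_dep M X real k n H Hk HC).
      * exists s0, (nseq n (pt M)). split; [auto|split; [unfold ys; rewrite size_iota; auto|auto]].
    + intros l Hl. unfold H. destruct (excluded_middle_informative (P l)) as [Hp|Hp]; split; intros E; auto;
        try contradiction; exfalso; apply (other_ne M (vl s0 c) Hm); auto.
  - intros Hall Y HY HdY.
    rewrite dep_sat in HdY.
    set (Spec := fun s l a => size l = n ->
       (exists r0, Y r0 /\ agree M (List.app real ys) r0 (updl M s ys l) /\ vl r0 b = a) \/
       ((~ exists r0, Y r0 /\ agree M (List.app real ys) r0 (updl M s ys l)) /\ a = vl s c)).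
    set (H := fun s l => keyc M (inhabits (pt M)) X real (fun s a => Spec s l a) s).
    assert (HC : forall s s' l, X s -> X s' -> agree M real s s' -> H s l = H s' l).
    { intros s s' l _ _ Ha. unfold H. apply keyc_agree; auto. }
    assert (Hup : forall s1 s l, size l = n -> agree M real s1 s ->
               agree M (List.app real ys) (updl M s1 ys l) (updl M s ys l)).
    { intros s1 s l Hl Ha v Hv. apply in_app_or in Hv. destruct Hv as [Hv|Hv].
      - rewrite !Hout; auto.
      - apply (map_eq_In _ _ ys); auto.
        rewrite !(updl_map M ys _ l (NoDup_iota k n)); auto; unfold ys; rewrite size_iota; auto. }
    assert (HSp : forall s l, X s -> Spec s l (H s l)).
    { intros s l Hs0. unfold H. apply keyc_spec; auto.
      - destruct (classic (exists r0, Y r0 /\ agree M (List.app real ys) r0 (updl M s ys l))) as [[r0 [Hr0 Ha0]]|Hn].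
        + exists (vl r0 b). intros _. left. eauto.
        + exists (vl s c). intros _. right. auto.
      - intros s1 a Hs1 Ha Hsp Hl. destruct (Hsp Hl) as [[r0 [Hr0 [Ha0 Hb0]]]|[Hn Ha1]].
        + left. exists r0; split; [auto|split; auto]. eapply agree_trans; [exact Ha0|]. apply Hup; auto.
        + right. split.
          * intros [r0 [Hr0 Ha0]]. apply Hn. exists r0; split; auto. eapply agree_trans; [exact Ha0|].
            apply agree_sym, Hup; auto.
          * rewrite Ha1. apply Ha; auto. }
    assert (HYZ : forall s, Y s -> ZH M X ys b H s).
    { intros r Hr. destruct (HY r Hr) as [s1 [a [[s0 [l [Hs0 [Hl ->]]]] ->]]].
      exists s0, l. split; [auto|split; [auto|]].
      assert (Hl' := Hl). unfold ys in Hl'; rewrite size_iota in Hl'.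
      f_equal. destruct (HSp s0 l Hs0 Hl') as [[r0 [Hr0 [Ha0 Hb0]]]|[Hn Ha1]].
      - rewrite <- Hb0.
        assert (E := HdY (upd (updl M s0 ys l) b a) r0 Hr Hr0).
        rewrite val_upd Nat.eqb_refl in E. apply E.
        eapply agree_trans; [apply (agree_ZH_row s0 l a Hk)|]. apply agree_sym; auto.
      - exfalso. apply Hn. exists (upd (updl M s0 ys l) b a). split; auto. apply (agree_ZH_row s0 l a Hk). }
    apply (downward M Fb HLF _ (ZH M X ys b H)); auto.
    rewrite IH; [|apply Inv_ZH; auto].
    intros s' [s0 [l0 [Hs0 [Hl0 ->]]]].
    assert (Hl0' := Hl0). unfold ys in Hl0'; rewrite size_iota in Hl0'.
    rewrite SEM_ZH; auto.
Qed.

End Big.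
End RELB.

Section Q.
Context {S : signature} (M : structure S).
Notation vl := (Defs.val M).

Lemma In_mem (T : eqType) (x : T) (s : list T) : In x s <-> x \in s.
Proof.
  induction s as [|y s IH]; [simpl; split; [tauto|by []]|].
  simpl In. split.
  - intros [->|H]; [by rewrite seq.in_cons eqxx|]. rewrite seq.in_cons. apply/orP; right; apply IH; exact H.
  - rewrite seq.in_cons. move=> /orP [/eqP ->|H]; [left; auto|right; apply IH; exact H].
Qed.

Lemma map_ord n (f : 'I_n -> M) (g : nat -> M) (ys : list nat) : size ys = n ->
  (seq.map g ys = [seq f k | k <- enum 'I_n] <-> forall k : 'I_n, g (seq.nth 0 ys k) = f k).
Proof.
  intros Hs. split.
  - intros E k. assert (E2 := f_equal (fun s => seq.nth (pt M) s k) E). simpl in E2.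
    rewrite (nth_map 0) in E2; [|rewrite Hs; apply ltn_ord].
    rewrite (nth_map k) in E2; [|rewrite size_enum_ord; apply ltn_ord].
    rewrite nth_ord_enum in E2. exact E2.
  - intros H. apply (eq_from_nth (x0 := pt M)).
    + rewrite size_map size_map size_enum_ord; auto.
    + intros j Hj. rewrite size_map in Hj.
      rewrite (nth_map 0); auto.
      assert (Hj' : j < n) by (rewrite <- Hs; auto).
      rewrite (nth_map (Ordinal Hj')); [|rewrite size_enum_ord; auto].
      assert (E : seq.nth (Ordinal Hj') (enum 'I_n) j = Ordinal Hj').
      { apply (nth_ord_enum (Ordinal Hj') (Ordinal Hj')). }
      rewrite E. apply (H (Ordinal Hj')).
Qed.

Lemma cond_iff sg ys n (args : 'I_n -> term S) r : size ys = n ->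
  ((forall l0, In l0 (seq.map (fun k0 : 'I_n => LPos (AEq (Var (seq.nth 0 ys k0)) (ren sg (args k0)))) (enum 'I_n)) ->
     lit_sat M (vl r) l0) <->
   seq.map (vl r) ys = [seq teval M (rho M sg r) (args k) | k <- enum 'I_n]).
Proof.
  intros Hs. rewrite (map_ord n (fun k => teval M (rho M sg r) (args k)) (vl r) ys Hs).
  split.
  - intros H k. assert (H1 := H (LPos (AEq (Var (seq.nth 0 ys k)) (ren sg (args k))))).
    simpl in H1. rewrite teval_ren in H1. apply H1. apply in_map_iff. exists k; split; auto.
    apply In_mem. by rewrite mem_enum.
  - intros H l0 Hl0. apply in_map_iff in Hl0. destruct Hl0 as [k [<- _]]. simpl. rewrite teval_ren. apply H.
Qed.

Lemma query_correct big c real sg tau k X V i n ys b (args : 'I_n -> term S) pol :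
  Inv M big c real sg tau k X -> tau i n = RFun ys b ->
  (bsat M V X (query c sg ys b n args pol) <->
   forall s, X s -> sem pol (Gsem M X real c tau s i n [seq teval M (rho M sg s) (args k) | k <- enum 'I_n])).
Proof.
  intros HI E. assert (HI0 := HI). destruct HI0 as [Hc Hk Hs HF Hsm].
  destruct (HF _ _ _ _ E) as [Hsz Hys Hb Hex Hdep].
  unfold query. rewrite imp_flat.
  set (L := fun r => [seq teval M (rho M sg r) (args k) | k <- enum 'I_n]).
  assert (HL : forall r s, agree M real r s -> L r = L s).
  { intros r s Ha. unfold L. rewrite (rho_agree M sg real r s Hs Ha). auto. }
  unfold Gsem. rewrite E.
  split.
  - intros H s Hxs. destruct pol; simpl.
    + intros r Hr Ha Hm. assert (H1 := H r Hr). simpl in H1. apply H1.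
      apply cond_iff; auto. rewrite Hm. symmetry. apply HL; auto.
    + intros HG. destruct (Hex s Hxs (L s)) as [r [Hr [Ha Hm]]]; [unfold L; rewrite size_map size_enum_ord; auto|].
      assert (H1 := H r Hr). simpl in H1. apply H1.
      * apply cond_iff; auto. rewrite Hm. apply HL; apply agree_sym; auto.
      * apply HG; auto.
  - intros H r Hr Hcond. apply cond_iff in Hcond; auto. destruct pol; simpl.
    + apply (H r Hr r Hr (agree_refl M real r) Hcond).
    + intros Heq. apply (H r Hr). intros r' Hr' Ha Hm.
      rewrite (Hdep r' r Hr' Hr Ha); [|rewrite Hm Hcond; auto].
      rewrite Heq. symmetry. apply Ha; auto.
Qed.

End Q.

Section Main.
Context {S : signature} (M : structure S).
Notation vl := (Defs.val M).

Lemma Inv_cons_real big c real sg tau k X :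
  Inv M big c real sg tau k X -> forall x, In (sg x) (k :: real).
Proof. intros [_ _ Hs _ _] x; simpl; auto. Qed.

Theorem tr_correct (psi : so S) : forall big c real sg tau k pol V X,
  Mode M big -> Inv M big c real sg tau k X ->
  (bsat M V X (tr big c real sg tau k pol psi) <-> forall s, X s -> SEM M pol sg tau X real c psi s).
Proof.
  induction psi as [a|i n args|p IH|p IHp q IHq|p IHp q IHq|x p IH|x p IH|i n p IH|i n p IH];
    intros big c real sg tau k pol V X Hm HI; simpl tr.
  -
    unfold SEM. simpl. split; intros H s Hs; specialize (H s Hs); destruct pol; simpl in *;
      rewrite ?atom_ren in H *; auto.
  -
    destruct (tau i n) as [b|ys b] eqn:E.
    + unfold SEM; simpl. unfold Gsem. rewrite E.
      destruct b, pol; simpl.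
      * split; [intros _ s _; reflexivity|intros _ Y _ H0; exact H0].
      * split; [intros H s Hs Ht; exact (H s Hs)|intros H s Hs; exact (H s Hs erefl)].
      * split; [intros H s Hs; exfalso; exact (H s Hs)|intros H s Hs; discriminate (H s Hs)].
      * split; [intros _ s _ H0; discriminate H0|intros _ Y _ H0; exact H0].
    + rewrite (query_correct M big c real sg tau k X V i n ys b args pol HI E). unfold SEM. simpl. tauto.
  -
    rewrite (IH big c real sg tau k (negb pol) V X Hm HI).
    split; intros H s Hs; specialize (H s Hs); unfold SEM in *; destruct pol; simpl in *; auto.
    apply NNPP; auto.
  -
    destruct pol.
    + simpl. rewrite (IHp _ _ _ _ _ _ _ V X Hm HI) (IHq _ _ _ _ _ _ _ V X Hm HI).
      unfold SEM; simpl. split; [intros [H1 H2] s Hs; auto|intros H; split; intros s Hs; apply H; auto].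
    + rewrite (orc_correct M big c real sg tau k false p q V X); auto;
        try (intros V' Y HY; first [apply IHp|apply IHq|apply IH]; auto; fail).
      unfold SEM; simpl. split; intros H s Hs; specialize (H s Hs); tauto.
  -
    destruct pol.
    + rewrite (orc_correct M big c real sg tau k true p q V X); auto;
        try (intros V' Y HY; first [apply IHp|apply IHq|apply IH]; auto; fail).
      unfold SEM; simpl. tauto.
    + simpl. rewrite (IHp _ _ _ _ _ _ _ V X Hm HI) (IHq _ _ _ _ _ _ _ V X Hm HI).
      unfold SEM; simpl. split; [intros [H1 H2] s Hs; specialize (H1 s Hs); specialize (H2 s Hs); tauto|].
      intros H; split; intros s Hs; specialize (H s Hs); tauto.
  -
    destruct pol.
    + rewrite (exq_correct M big c real sg tau k x p true V X); auto;
        try (intros V' Y HY; first [apply IHp|apply IHq|apply IH]; auto; fail).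
      unfold SEM; simpl. tauto.
    + rewrite (allq_correct M big c real sg tau k x p false V X); auto;
        try (intros V' Y HY; first [apply IHp|apply IHq|apply IH]; auto; fail).
      unfold SEM; simpl. split; intros H s Hs; specialize (H s Hs).
        + intros [a Ha]. apply (H a Ha).
        + intros a Ha. apply H. exists a; auto.
  -
    destruct pol.
    + rewrite (allq_correct M big c real sg tau k x p true V X); auto;
        try (intros V' Y HY; first [apply IHp|apply IHq|apply IH]; auto; fail).
      unfold SEM; simpl. tauto.
    + rewrite (exq_correct M big c real sg tau k x p false V X); auto;
        try (intros V' Y HY; first [apply IHp|apply IHq|apply IH]; auto; fail).
      unfold SEM; simpl. split; intros H s Hs; specialize (H s Hs).
        + intros Ha. destruct H as [a Hna]. apply Hna, Ha.
        + apply not_all_ex_not in H. destruct H as [a Ha]. exists a; auto.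
  -
    destruct pol; [unfold exr|unfold allr]; destruct big.
    + rewrite (exr_big M c real sg tau k i n true p V X); auto;
        try (intros V' Y HY; first [apply IHp|apply IHq|apply IH]; auto; fail).
      unfold SEM, QR; simpl. tauto.
    + rewrite (exr_small M c real sg tau k i n true p V X); auto;
        try (intros V' Y HY; first [apply IHp|apply IHq|apply IH]; auto; fail).
      unfold SEM, QR; simpl. tauto.
    + rewrite (allr_big M c real sg tau k i n false p V X); auto; try apply LF_tr;
        try (intros V' Y HY; first [apply IHp|apply IHq|apply IH]; auto; fail).
      unfold SEM, QR; simpl. split; intros H s Hs; specialize (H s Hs).
        + intros [P HP]. apply (H P HP).
        + intros P HP. apply H. exists P; auto.
    + rewrite (allr_small M c real sg tau k i n false p V X); auto;
        try (intros V' Y HY; first [apply IHp|apply IHq|apply IH]; auto; fail).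
      unfold SEM, QR; simpl. split; intros H s Hs; specialize (H s Hs).
        + intros [P HP]. apply (H P HP).
        + intros P HP. apply H. exists P; auto.
  -
    destruct pol; [unfold allr|unfold exr]; destruct big.
    + rewrite (allr_big M c real sg tau k i n true p V X); auto; try apply LF_tr;
        try (intros V' Y HY; first [apply IHp|apply IHq|apply IH]; auto; fail).
      unfold SEM, QR; simpl. tauto.
    + rewrite (allr_small M c real sg tau k i n true p V X); auto;
        try (intros V' Y HY; first [apply IHp|apply IHq|apply IH]; auto; fail).
      unfold SEM, QR; simpl. tauto.
    + rewrite (exr_big M c real sg tau k i n false p V X); auto;
        try (intros V' Y HY; first [apply IHp|apply IHq|apply IH]; auto; fail).
      unfold SEM, QR; simpl. split; intros H s Hs; specialize (H s Hs).
        + intros Ha. destruct H as [P HP]. apply HP, Ha.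
        + apply not_all_ex_not in H. destruct H as [P HP]. exists P; auto.
    + rewrite (exr_small M c real sg tau k i n false p V X); auto;
        try (intros V' Y HY; first [apply IHp|apply IHq|apply IH]; auto; fail).
      unfold SEM, QR; simpl. split; intros H s Hs; specialize (H s Hs).
        + intros Ha. destruct H as [P HP]. apply HP, Ha.
        + apply not_all_ex_not in H. destruct H as [P HP]. exists P; auto.
Qed.

End Main.

Section Top.
Context {S : signature} (M : structure S).
Notation vl := (Defs.val M).

Definition X0 : team M := fun s' => exists s a, empty_team M s /\ s' = upd s 2 a.

Lemma Inv0 big : Inv M big 2 [:: 2] (fun _ => 2) (fun _ _ => RConst false) 3 X0.
Proof.
  split; simpl; auto.
  - intros v [<-|[]]; lia.
  - intros i n ys b E; discriminate.
  - intros _ i n; eauto.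
Qed.

Lemma Small_sat V : bsat M V X0 (@Small S) <-> forall a b : M, a = b.
Proof.
  simpl. split.
  - intros H a b.
    assert (H1 := H (upd (upd (upd (fun _ => None) 2 (pt M)) 3 a) 4 b)).
    unfold eqv in H1; simpl in H1. unfold tv in H1; simpl in H1.
    rewrite !val_upd in H1. simpl in H1. apply H1.
    exists (upd (upd (fun _ => None) 2 (pt M)) 3 a), b. split; auto.
    exists (upd (fun _ => None) 2 (pt M)), a. split; auto.
    exists (fun _ => None), (pt M). split; auto. reflexivity.
  - intros H s _. simpl. apply H.
Qed.

Lemma Small_sat_sub V Y : (forall s, Y s -> X0 s) -> bsat M V Y (@Small S) -> (exists s, Y s) -> forall a b : M, a = b.
Proof.
  intros HY H [s0 Hs0] a b. simpl in H.
  assert (H1 := H (upd (upd s0 3 a) 4 b)).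
  simpl in H1. rewrite !val_upd in H1. simpl in H1. apply H1.
  exists (upd s0 3 a), b. split; auto. exists s0, a. split; auto.
Qed.

Theorem top_correct (psi : so S) : so_sentence psi -> (bid_models M (top psi) <-> so_models M psi).
Proof.
  intros [Hfree _]. unfold bid_models, top.
  change (bsat M [:: 2] X0 (BVee (BAnd Small (tr false 2 [:: 2] (fun _ => 2) (fun _ _ => RConst false) 3 true psi))
               (BAnd Big (tr true 2 [:: 2] (fun _ => 2) (fun _ _ => RConst false) 3 true psi))) <-> so_models M psi).
  assert (HX0 : X0 (upd (fun _ => None) 2 (pt M))) by (exists (fun _ => None), (pt M); split; auto; reflexivity).
  assert (Hsem : forall s, X0 s -> (SEM M true (fun _ => 2) (fun _ _ => RConst false) X0 [:: 2] 2 psi s <-> so_models M psi)).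
  { intros s _. unfold SEM, so_models; simpl. apply ssat_ext.
    - intros x Hx. exfalso. apply (Hfree x Hx).
    - intros i n l _. unfold Gsem. split; [discriminate|tauto]. }
  assert (Hall : forall big, Mode M big ->
     (bsat M [:: 2] X0 (tr big 2 [:: 2] (fun _ => 2) (fun _ _ => RConst false) 3 true psi) <-> so_models M psi)).
  { intros big Hm. rewrite (tr_correct M psi big 2 [:: 2] (fun _ => 2) (fun _ _ => RConst false) 3 true [:: 2] X0 Hm (Inv0 big)).
    split; [intros H; rewrite <- (Hsem _ HX0); auto|intros H s Hs; rewrite (Hsem s Hs); auto]. }
  assert (EV : forall A B : bid S, bsat M [:: 2] X0 (BVee A B) <-> bsat M [:: 2] X0 A \/ bsat M [:: 2] X0 B)
    by (intros; simpl; tauto).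
  assert (EA : forall A B : bid S, bsat M [:: 2] X0 (BAnd A B) <-> bsat M [:: 2] X0 A /\ bsat M [:: 2] X0 B)
    by (intros; simpl; tauto).
  rewrite EV !EA.
  destruct (classic (forall a b : M, a = b)) as [H1|H1].
  - assert (Hm : Mode M false) by exact H1.
    rewrite (Hall false Hm). split.
    + intros [[_ H]|[HB _]]; auto. exfalso.
      refine (HB X0 (fun s h => h) _ _ HX0). apply (Small_sat [:: 2]); auto.
    + intros H; left; split; auto. apply Small_sat; auto.
  - assert (Hm : Mode M true).
    { intros a. apply NNPP. intros Hn. apply H1. intros x y.
      assert (Hx : x = a) by (apply NNPP; intros Hx; apply Hn; exists x; auto).
      assert (Hy : y = a) by (apply NNPP; intros Hy; apply Hn; exists y; auto). congruence. }
    rewrite (Hall true Hm). split.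
    + intros [[HS _]|[_ H]]; auto. exfalso. apply H1. apply (Small_sat [:: 2]); auto.
    + intros H; right; split; auto.
      intros Y HY HSY s Hs. apply H1. apply (Small_sat_sub [:: 2] Y); eauto.
Qed.

End Top.

Theorem lemma5p7 (S : signature) (psi : so S) :
  so_sentence psi ->
  exists phi : bid S, bid_sentence phi /\
    forall M : structure S, so_models M psi <-> bid_models M phi.
Proof.
  intros Hs. exists (top psi). split.
  - apply top_sentence.
  - intros M. symmetry. apply top_correct; auto.
Qed.
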